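(* Let $\theta>1$, $p>1$, $\varepsilon>0$, let $F(u)=\frac{1}{2\theta}|1-u^2|^{\theta}$ and, for $\beta\in\mathbb{R}$, let $G_\beta(u):=F(u)-\beta u$. Set $u_\pm:=\pm(2\theta-1)^{-1/2}$, so that $F'(u_\pm)=\mp(2\theta-1)^{1/2-\theta}(2\theta-2)^{\theta-1}$. Consider the ODE on the whole real line $$\varepsilon^p\big(|u_x|^{p-2}u_x\big)_x-G_\beta'(u)=0,\qquad x\in\mathbb{R}.$$ (i) Let $\beta\in(0,F'(u_-))$ and set $z_\beta^-:=\min\{z\in\mathbb{R}: G_\beta'(z)=0\}$. If $2<p\le\theta$, then there exists a solution $\psi_\beta$ of the ODE with $\psi_\beta(0)=\max_{\mathbb{R}}\psi_\beta=:z_\beta^+$, with $G_\beta(z_\beta^+)=G_\beta(z_\beta^-)$, and there exists $\omega_\beta>0$ such that $\psi_\beta(x)=z_\beta^-$ for all $x\in(-\infty,-\omega_\beta]\cup[\omega_\beta,+\infty)$, $\psi_\beta'>0$ in $(-\omega_\beta,0)$ and $\psi_\beta'<0$ in $(0,\omega_\beta)$. Moreover $\lim_{\beta\to0^+}z_\beta^\pm=\pm1$. (ii) Let $\beta\in(F'(u_+),0)$ and set $z_\beta^+:=\max\{z\in\mathbb{R}: G_\beta'(z)=0\}$. If $2<p\le\theta$, then there exists a solution $\psi_\beta$ of the ODE with $\psi_\beta(0)=\min_{\mathbb{R}}\psi_\beta=:z_\beta^-$, with $G_\beta(z_\beta^-)=G_\beta(z_\beta^+)$, and there exists $\omega_\beta>0$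 such that $\psi_\beta(x)=z_\beta^+$ for all $x\in(-\infty,-\omega_\beta]\cup[\omega_\beta,+\infty)$, $\psi_\beta'<0$ in $(-\omega_\beta,0)$ and $\psi_\beta'>0$ in $(0,\omega_\beta)$.
   Context: For $\beta\in(F'(u_+),F'(u_-))$ the function $G_\beta$ has exactly three critical points. The solutions $\psi_\beta$ are called pulse (homoclinic) solutions. *)

(* Defs.v *)
From Stdlib Require Import Reals.
From Coquelicot Require Import Coquelicot.
Open Scope R_scope.

(* Real power x^a for x >= 0, with the convention 0^a = 0 (a > 0). *)
Definition rpow (x a : R) : R :=
  if Rlt_dec 0 x then Rpower x a else 0.

Definition F (th u : R) : R := / (2 * th) * rpow (Rabs (1 - u ^ 2)) th.

Definition G (th beta u : R) : R := F th u - beta * u.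

Definition u_plus (th : R) : R := Rpower (2 * th - 1) (- / 2).
Definition u_minus (th : R) : R := - Rpower (2 * th - 1) (- / 2).

Definition phi_p (p s : R) : R := rpow (Rabs s) (p - 2) * s.

Definition is_solution (th p eps beta : R) (psi : R -> R) : Prop :=
  (forall x, ex_derive psi x) /\
  (forall x, ex_derive (fun y => phi_p p (Derive psi y)) x /\
     Rpower eps p * Derive (fun y => phi_p p (Derive psi y)) x
       - Derive (G th beta) (psi x) = 0).

Definition is_min_crit (th beta z : R) : Prop :=
  Derive (G th beta) z = 0 /\
  forall w, Derive (G th beta) w = 0 -> z <= w.

Definition is_max_crit (th beta z : R) : Prop :=
  Derive (G th beta) z = 0 /\
  forall w, Derive (G th beta) w = 0 -> w <= z.

Definition pulse_up (th p eps beta zm : R) (psi : R -> R) : Prop :=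
  is_solution th p eps beta psi /\
  (forall x, psi x <= psi 0) /\
  G th beta (psi 0) = G th beta zm /\
  exists om : R, 0 < om /\
    (forall x, (x <= - om \/ om <= x) -> psi x = zm) /\
    (forall x, - om < x < 0 -> 0 < Derive psi x) /\
    (forall x, 0 < x < om -> Derive psi x < 0).

Definition pulse_down (th p eps beta zp : R) (psi : R -> R) : Prop :=
  is_solution th p eps beta psi /\
  (forall x, psi 0 <= psi x) /\
  G th beta (psi 0) = G th beta zp /\
  exists om : R, 0 < om /\
    (forall x, (x <= - om \/ om <= x) -> psi x = zp) /\
    (forall x, - om < x < 0 -> Derive psi x < 0) /\
    (forall x, 0 < x < om -> 0 < Derive psi x).

(* Main.v *)
Require Import Defs.
From Stdlib Require Import Reals.
From Coquelicot Require Import Coquelicot.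
From Stdlib Require Import Lra ClassicalEpsilon.
Open Scope R_scope.

Ltac solve_abs := unfold Rabs in *; repeat match goal with |- context [Rcase_abs ?x] => destruct (Rcase_abs x) | H: context [Rcase_abs ?x] |- _ => destruct (Rcase_abs x) end; lra.

Lemma cont_of_derive (f : R -> R) x l : is_derive f x l -> continuity_pt f x.
Proof.
  intros H. apply continuity_pt_filterlim. apply (ex_derive_continuous f x).
  exists l; exact H.
Qed.

Lemma mono_deriv (h dh : R -> R) (a b : R) : a <= b ->
  (forall x, a < x < b -> is_derive h x (dh x)) ->
  (forall x, a <= x <= b -> continuity_pt h x) ->
  (forall x, a < x < b -> 0 <= dh x) -> h a <= h b.
Proof.
  intros Hab Hd Hc Hp.
  destruct (Req_dec a b) as [->|Hne]; [lra|].
  set (df := fun x => if Rlt_dec a x then if Rlt_dec x b then dh x else 0 else 0).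
  destruct (MVT_gen h a b df) as [c [Hc1 Hc2]].
  - intros x Hx. rewrite Rmin_left in Hx by lra. rewrite Rmax_right in Hx by lra.
    apply is_derive_ext_loc with (f := h); [|].
    + apply filter_forall; auto.
    + unfold df. destruct (Rlt_dec a x); [|lra]. destruct (Rlt_dec x b); [|lra].
      apply Hd; lra.
  - intros x Hx. rewrite Rmin_left in Hx by lra. rewrite Rmax_right in Hx by lra. apply Hc; lra.
  - assert (0 <= df c).
    { unfold df. destruct (Rlt_dec a c); [|lra]. destruct (Rlt_dec c b); [|lra]. apply Hp; lra. }
    assert (0 <= df c * (b - a)) by (apply Rmult_le_pos; lra). lra.
Qed.

Lemma smono_deriv (h dh : R -> R) (a b : R) : a < b ->
  (forall x, a < x < b -> is_derive h x (dh x)) ->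
  (forall x, a <= x <= b -> continuity_pt h x) ->
  (forall x, a < x < b -> 0 < dh x) -> h a < h b.
Proof.
  intros Hab Hd Hc Hp.
  set (df := fun x => if Rlt_dec a x then if Rlt_dec x b then dh x else 1 else 1).
  destruct (MVT_gen h a b df) as [c [Hc1 Hc2]].
  - intros x Hx. rewrite Rmin_left in Hx by lra. rewrite Rmax_right in Hx by lra.
    apply is_derive_ext_loc with (f := h); [|].
    + apply filter_forall; auto.
    + unfold df. destruct (Rlt_dec a x); [|lra]. destruct (Rlt_dec x b); [|lra].
      apply Hd; lra.
  - intros x Hx. rewrite Rmin_left in Hx by lra. rewrite Rmax_right in Hx by lra. apply Hc; lra.
  - assert (0 < df c).
    { unfold df. destruct (Rlt_dec a c); [|lra]. destruct (Rlt_dec c b); [|lra]. apply Hp; lra. }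
    assert (0 < df c * (b - a)) by (apply Rmult_lt_0_compat; lra). lra.
Qed.

Lemma deriv_limit (f d : R -> R) (a l : R) :
  continuity_pt f a ->
  (exists del, 0 < del /\ forall y, y <> a -> Rabs (y - a) < del -> is_derive f y (d y)) ->
  (forall eps, 0 < eps -> exists eta, 0 < eta /\
     forall y, y <> a -> Rabs (y - a) < eta -> Rabs (d y - l) < eps) ->
  is_derive f a l.
Proof.
  intros Hc [del [Hdel Hd]] Hl.
  apply is_derive_Reals. intros eps Heps.
  destruct (Hl (eps/2)) as [eta [Heta Hy]]; [lra|].
  assert (Hm : 0 < Rmin del eta) by (apply Rmin_pos; lra).
  exists (mkposreal _ Hm). intros h Hh0 Hh. simpl in Hh.
  set (df := fun y => if Req_EM_T y a then l else d y).
  assert (Hder : forall x, Rmin a (a+h) < x < Rmax a (a+h) -> is_derive f x (df x)).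
  { intros x Hx. unfold df. destruct (Req_EM_T x a).
    - exfalso. subst x. destruct (Rle_dec 0 h).
      + rewrite Rmin_left in Hx by lra. lra.
      + rewrite Rmin_right in Hx by lra. rewrite Rmax_left in Hx by lra. lra.
    - apply Hd; auto.
      assert (Rabs h < del) by (eapply Rlt_le_trans; [exact Hh| apply Rmin_l]).
      destruct (Rle_dec 0 h).
      + rewrite Rmin_left in Hx by lra. rewrite Rmax_right in Hx by lra.
        solve_abs.
      + rewrite Rmin_right in Hx by lra. rewrite Rmax_left in Hx by lra.
        solve_abs. }
  destruct (MVT_gen f a (a+h) df Hder) as [c [Hc1 Hc2]].
  { intros x Hx. destruct (Req_dec x a) as [->|Hxa]; auto.
    destruct (Rle_dec 0 h).
    - rewrite Rmin_left in Hx by lra. rewrite Rmax_right in Hx by lra.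
      apply cont_of_derive with (d x). apply Hd; auto.
      assert (Rabs h < del) by (eapply Rlt_le_trans; [exact Hh| apply Rmin_l]).
      solve_abs.
    - rewrite Rmin_right in Hx by lra. rewrite Rmax_left in Hx by lra.
      apply cont_of_derive with (d x). apply Hd; auto.
      assert (Rabs h < del) by (eapply Rlt_le_trans; [exact Hh| apply Rmin_l]).
      solve_abs. }
  replace ((f (a + h) - f a) / h - l) with (df c - l).
  2:{ rewrite Hc2. field. exact Hh0. }
  assert (Habs : Rabs (df c - l) < eps / 2).
  { unfold df. destruct (Req_EM_T c a).
    - rewrite Rminus_diag, Rabs_R0. lra.
    - apply Hy; auto.
      assert (Rabs h < eta) by (eapply Rlt_le_trans; [exact Hh| apply Rmin_r]).
      destruct (Rle_dec 0 h).
      + rewrite Rmin_left in Hc1 by lra. rewrite Rmax_right in Hc1 by lra.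
        solve_abs.
      + rewrite Rmin_right in Hc1 by lra. rewrite Rmax_left in Hc1 by lra.
        solve_abs. }
  lra.
Qed.

Lemma loc_of_ball (x : R) (P : R -> Prop) (d : R) : 0 < d ->
  (forall y, Rabs (y - x) < d -> P y) -> locally x P.
Proof.
  intros Hd H. exists (mkposreal d Hd). intros y Hy. apply H. exact Hy.
Qed.

Lemma is_derive_Rpower_comp (u : R -> R) x du a : 0 < u x -> is_derive u x du ->
  is_derive (fun y => Rpower (u y) a) x (a * Rpower (u x) (a - 1) * du).
Proof.
  intros Hp Hd.
  assert (H1 : is_derive (fun z => Rpower z a) (u x) (a * Rpower (u x) (a - 1))).
  { apply is_derive_Reals. apply derivable_pt_lim_power; auto. }
  pose proof (is_derive_comp (fun z => Rpower z a) u x _ _ H1 Hd) as H.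
  simpl in H. unfold scal in H; simpl in H; unfold mult in H; simpl in H.
  replace (a * Rpower (u x) (a - 1) * du) with (du * (a * Rpower (u x) (a - 1))) by ring.
  exact H.
Qed.

Lemma rpow_pos x a : 0 < x -> rpow x a = Rpower x a.
Proof. intros H. unfold rpow. destruct (Rlt_dec 0 x); [auto|lra]. Qed.

Lemma rpow_npos x a : x <= 0 -> rpow x a = 0.
Proof. intros H. unfold rpow. destruct (Rlt_dec 0 x); [lra|auto]. Qed.

Lemma Rpower_pos x a : 0 < Rpower x a.
Proof. unfold Rpower. apply exp_pos. Qed.

Lemma rpow_nonneg x a : 0 <= rpow x a.
Proof. unfold rpow. destruct (Rlt_dec 0 x); [left; apply Rpower_pos| lra]. Qed.

Lemma rpow_small a eps : 0 < a -> 0 < eps -> exists d, 0 < d /\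
  forall y, Rabs y < d -> rpow y a < eps.
Proof.
  intros Ha He. exists (Rpower eps (/ a)). split; [apply Rpower_pos|].
  intros y Hy. destruct (Rlt_dec 0 y).
  - rewrite rpow_pos by auto. rewrite Rabs_right in Hy by lra.
    replace eps with (Rpower (Rpower eps (/a)) a).
    + apply Rlt_Rpower_l; auto.
    + rewrite Rpower_mult. replace (/ a * a) with 1 by (field; lra). apply Rpower_1; auto.
  - rewrite rpow_npos by lra. auto.
Qed.

Lemma rpow_cont a x : 0 < a -> continuity_pt (fun y => rpow y a) x.
Proof.
  intros Ha. destruct (Rtotal_order x 0) as [Hx|[Hx|Hx]].
  - apply continuity_pt_ext_loc with (f := fun _ => 0).
    + apply loc_of_ball with (-x); [lra|]. intros y Hy.
      rewrite rpow_npos; auto. solve_abs.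
    + apply continuity_pt_const. intros ? ?; auto.
  - subst x. intros eps Heps. destruct (rpow_small a eps Ha Heps) as [d [Hd Hs]].
    exists d. split; auto. intros y [_ Hy]. simpl in *. unfold R_dist in *.
    rewrite (rpow_npos 0) by lra. rewrite Rminus_0_r in *.
    rewrite Rabs_right by (apply Rle_ge, rpow_nonneg). apply Hs. auto.
  - apply continuity_pt_ext_loc with (f := fun y => Rpower y a).
    + apply loc_of_ball with x; [lra|]. intros y Hy.
      rewrite rpow_pos; auto. solve_abs.
    + apply derivable_continuous_pt. exists (a * Rpower x (a - 1)).
      apply derivable_pt_lim_power; auto.
Qed.

Lemma continuity_pt_comp' (f g : R -> R) x : continuity_pt g x -> continuity_pt f (g x) ->
  continuity_pt (fun y => f (g y)) x.
Proof. intros. apply (continuity_pt_comp g f x); auto. Qed.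

Lemma rpow_abs_cont a x : 0 < a -> continuity_pt (fun y => rpow (Rabs y) a) x.
Proof.
  intros Ha. apply (continuity_pt_comp' (fun z => rpow z a) Rabs x); [apply Rcontinuity_abs| apply rpow_cont; auto].
Qed.

Lemma is_derive_rpow_abs th w : 2 < th ->
  is_derive (fun y => rpow (Rabs y) th) w (th * w * rpow (Rabs w) (th - 2)).
Proof.
  intros Hth.
  assert (Hgen : forall w, w <> 0 ->
     is_derive (fun y => rpow (Rabs y) th) w (th * w * rpow (Rabs w) (th - 2))).
  { clear w. intros w Hw. destruct (Rlt_dec 0 w).
    - apply is_derive_ext_loc with (f := fun y => Rpower y th).
      + apply loc_of_ball with w; [lra|]. intros y Hy.
        rewrite Rabs_right by solve_abs. rewrite rpow_pos; auto. solve_abs.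
      + rewrite Rabs_right by lra. rewrite rpow_pos by auto.
        apply is_derive_Reals.
        replace (th * w * Rpower w (th - 2)) with (th * Rpower w (th - 1)).
        * apply derivable_pt_lim_power; auto.
        * replace (th - 1) with (1 + (th - 2)) by ring. rewrite Rpower_plus, Rpower_1 by auto. ring.
    - assert (w < 0) by lra.
      apply is_derive_ext_loc with (f := fun y => Rpower (- y) th).
      + apply loc_of_ball with (-w); [lra|]. intros y Hy.
        rewrite Rabs_left by solve_abs. rewrite rpow_pos; auto. solve_abs.
      + rewrite Rabs_left by lra. rewrite rpow_pos by lra.
        assert (Hd : is_derive (fun y => - y) w (-1)).
        { apply is_derive_Reals. replace (-1) with (- (1)) by ring.
          apply derivable_pt_lim_opp. apply derivable_pt_lim_id. }
        pose proof (is_derive_Rpower_comp (fun y => - y) w (-1) th) as HH.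
        simpl in HH. eapply is_derive_ext; [intros; reflexivity|].
        replace (th * w * Rpower (- w) (th - 2)) with (th * Rpower (- w) (th - 1) * -1).
        * apply HH; [lra| exact Hd].
        * replace (th - 1) with (1 + (th - 2)) by ring. rewrite Rpower_plus, Rpower_1 by lra. ring. }
  destruct (Req_EM_T w 0) as [->|Hw]; [|apply Hgen; auto].
  replace (th * 0 * rpow (Rabs 0) (th - 2)) with 0 by ring.
  apply deriv_limit with (d := fun w => th * w * rpow (Rabs w) (th - 2)).
  - apply rpow_abs_cont; lra.
  - exists 1. split; [lra|]. intros y Hy _. apply Hgen; auto.
  - intros eps Heps.
    destruct (rpow_small (th - 2) (eps / th)) as [d [Hd Hs]]; [lra| apply Rdiv_lt_0_compat; lra|].
    exists (Rmin d 1). split; [apply Rmin_pos; lra|]. intros y Hy Hyd.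
    rewrite Rminus_0_r in *. 
    assert (Hy1 : Rabs y < 1) by (eapply Rlt_le_trans; [exact Hyd|apply Rmin_r]).
    assert (Hy2 : Rabs y < d) by (eapply Rlt_le_trans; [exact Hyd|apply Rmin_l]).
    assert (Hr : rpow (Rabs y) (th - 2) < eps / th) by (apply Hs; rewrite Rabs_Rabsolu; auto).
    pose proof (rpow_nonneg (Rabs y) (th - 2)).
    rewrite Rabs_mult, Rabs_mult, (Rabs_right th) by lra.
    rewrite (Rabs_right (rpow _ _)) by lra.
    assert (Rabs y * rpow (Rabs y) (th - 2) <= 1 * rpow (Rabs y) (th - 2)).
    { apply Rmult_le_compat; try lra. apply Rabs_pos. }
    pose proof (Rabs_pos y).
    apply Rlt_le_trans with (th * (eps / th)).
    + rewrite Rmult_assoc. apply Rmult_lt_compat_l; lra.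
    + right; field; lra.
Qed.

Lemma clamp_cont (u1 u2 x : R) : u1 <= u2 -> continuity_pt (fun y => Rmax u1 (Rmin u2 y)) x.
Proof.
  intros H eps Heps. exists eps. split; auto. intros y [_ Hy]. simpl in *. unfold R_dist in *.
  unfold Rmax, Rmin. repeat (destruct Rle_dec); solve_abs.
Qed.

Lemma inverse_exists (T f : R -> R) (zm zp A B : R) :
  zm < zp ->
  (forall u, zm < u < zp -> is_derive T u (f u) /\ 0 < f u) ->
  (forall u, zm < u < zp -> A < T u < B) ->
  (forall t, A < t -> exists u, zm < u < zp /\ T u < t) ->
  (forall t, t < B -> exists u, zm < u < zp /\ t < T u) ->
  exists chi : R -> R,
    (forall t, zm <= chi t <= zp) /\
    (forall t, t <= A -> chi t = zm) /\
    (forall t, B <= t -> chi t = zp) /\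
    (forall t, A < t < B -> zm < chi t < zp /\ T (chi t) = t) /\
    (forall t, continuity_pt chi t) /\
    (forall t, A < t < B -> is_derive chi t (/ f (chi t))).
Proof.
  intros Hz HT HAB HA HB.
  assert (Tc : forall u, zm < u < zp -> continuity_pt T u).
  { intros u Hu. apply cont_of_derive with (f u). apply HT; auto. }
  assert (Tm : forall u v, zm < u -> u < v -> v < zp -> T u < T v).
  { intros u v H1 H2 H3. apply smono_deriv with f; auto.
    - intros x Hx; apply HT; lra.
    - intros x Hx; apply Tc; lra.
    - intros x Hx; apply HT; lra. }
  assert (Tm' : forall u v, zm < u < zp -> zm < v < zp -> T u <= T v -> u <= v).
  { intros u v Hu Hv Huv. destruct (Rle_dec u v); auto.
    assert (T v < T u) by (apply Tm; lra). lra. }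
  assert (Hex : forall t, A < t < B -> exists u, zm < u < zp /\ T u = t).
  { intros t [Ht1 Ht2]. destruct (HA t Ht1) as [u1 [Hu1 Hu1t]].
    destruct (HB t Ht2) as [u2 [Hu2 Hu2t]].
    assert (u1 < u2) by (destruct (Rle_dec u2 u1); [assert (T u2 <= T u1) by
       (destruct (Req_dec u2 u1); [subst; lra| left; apply Tm; lra]); lra| lra]).
    set (Tt := fun y => T (Rmax u1 (Rmin u2 y))).
    assert (Hc : continuity Tt).
    { intros y. unfold Tt. apply (continuity_pt_comp' T (fun y => Rmax u1 (Rmin u2 y)) y).
      - apply clamp_cont; lra.
      - apply Tc. unfold Rmax, Rmin; repeat destruct Rle_dec; lra. }
    destruct (IVT_gen Tt u1 u2 t Hc) as [u [Hu HTu]].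
    - assert (E1 : Tt u1 = T u1).
      { unfold Tt. rewrite Rmin_right by lra. rewrite Rmax_left by lra. auto. }
      assert (E2 : Tt u2 = T u2).
      { unfold Tt. rewrite Rmin_left by lra. rewrite Rmax_right by lra. auto. }
      rewrite E1, E2. rewrite Rmin_left by lra. rewrite Rmax_right by lra. split; lra.
    - rewrite Rmin_left in Hu by lra. rewrite Rmax_right in Hu by lra.
      exists u. split; [lra|]. unfold Tt in HTu.
      rewrite Rmin_right in HTu by lra. rewrite Rmax_right in HTu by lra. auto. }
  set (chi := fun t => match Rle_dec t A with left _ => zm | right _ =>
                match Rle_dec B t with left _ => zp | right _ =>
                  match excluded_middle_informative (A < t < B) with
                  | left H => proj1_sig (constructive_indefinite_description _ (Hex t H))
                  | right _ => zm end end end).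
  assert (Hin : forall t, A < t < B -> zm < chi t < zp /\ T (chi t) = t).
  { intros t Ht. unfold chi. destruct (Rle_dec t A); [lra|]. destruct (Rle_dec B t); [lra|].
    destruct (excluded_middle_informative (A < t < B)); [|tauto].
    destruct (constructive_indefinite_description _ _) as [u Hu]. simpl. auto. }
  assert (HlA : forall t, t <= A -> chi t = zm).
  { intros t Ht. unfold chi. destruct (Rle_dec t A); [auto|lra]. }
  assert (HgB : forall t, B <= t -> chi t = zp).
  { intros t Ht. unfold chi. destruct (Rle_dec t A).
    - exfalso. destruct (Hex ((A+B)/2)) as [u [Hu _]].
      { assert (A < B). { assert (Hm: zm < (zm+zp)/2 < zp) by lra. pose proof (HAB _ Hm). lra. } lra. }
      pose proof (HAB u Hu). lra.
    - destruct (Rle_dec B t); [auto|lra]. }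
  assert (HAB' : A < B). { assert (Hm: zm < (zm+zp)/2 < zp) by lra. pose proof (HAB _ Hm). lra. }
  assert (Hrange : forall t, zm <= chi t <= zp).
  { intros t. destruct (Rle_dec t A). { rewrite HlA; lra. }
    destruct (Rle_dec B t). { rewrite HgB; lra. }
    destruct (Hin t) as [H1 _]; lra. }
  assert (Hbetw : forall u1 u2 t', zm < u1 -> u1 < u2 -> u2 < zp -> T u1 < t' < T u2 ->
            u1 < chi t' < u2).
  { intros u1 u2 t' H1 H2 H3 Ht.
    assert (HAt : A < t' < B) by (pose proof (HAB u1); pose proof (HAB u2); split; [|]; lra).
    destruct (Hin t' HAt) as [Hc Ht'].
    split.
    - destruct (Rle_dec (chi t') u1); [|lra].
      destruct (Req_dec (chi t') u1) as [He|Hne].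
      + rewrite He in Ht'. lra.
      + assert (T (chi t') < T u1) by (apply Tm; lra). lra.
    - destruct (Rle_dec u2 (chi t')); [|lra].
      destruct (Req_dec (chi t') u2) as [He|Hne].
      + rewrite He in Ht'. lra.
      + assert (T u2 < T (chi t')) by (apply Tm; lra). lra. }
  assert (Hcont : forall t, continuity_pt chi t).
  { intros t eps Heps.
    destruct (Rtotal_order t A) as [Ht|[Ht|Ht]].
    - exists (A - t). split; [lra|]. intros y [_ Hy]. simpl in *; unfold R_dist in *.
      rewrite !HlA by solve_abs. rewrite Rminus_diag, Rabs_R0; lra.
    - subst t. set (u2 := Rmin (zm + eps/2) ((zm+zp)/2)).
      assert (Hu2 : zm < u2 < zp) by (unfold u2, Rmin; destruct Rle_dec; lra).
      assert (HT2 := HAB u2 Hu2).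
      exists (T u2 - A). split; [lra|]. intros y [_ Hy]. simpl in *; unfold R_dist in *.
      rewrite (HlA A) by lra.
      destruct (Rle_dec y A). { rewrite HlA by auto. rewrite Rminus_diag, Rabs_R0; lra. }
      destruct (HA y) as [u1 [Hu1 Hu1y]]; [lra|].
      assert (u1 < u2).
      { destruct (Rle_dec u2 u1); [|lra]. destruct (Req_dec u2 u1) as [He|]; [rewrite He in *; solve_abs|].
        assert (T u2 < T u1) by (apply Tm; lra). solve_abs. }
      assert (Hb := Hbetw u1 u2 y ltac:(lra) ltac:(lra) ltac:(lra) ltac:(solve_abs)).
      assert (u2 <= zm + eps/2) by (unfold u2; apply Rmin_l). solve_abs.
    - destruct (Rtotal_order t B) as [Ht2|[Ht2|Ht2]].
      + destruct (Hin t ltac:(lra)) as [Hct HTt].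
        set (u := chi t) in *.
        set (u1 := Rmax (u - eps/2) ((zm+u)/2)).
        set (u2 := Rmin (u + eps/2) ((u+zp)/2)).
        assert (H1 : zm < u1 < u) by (unfold u1, Rmax; destruct Rle_dec; lra).
        assert (H2 : u < u2 < zp) by (unfold u2, Rmin; destruct Rle_dec; lra).
        assert (T u1 < t) by (rewrite <- HTt; apply Tm; lra).
        assert (t < T u2) by (rewrite <- HTt; apply Tm; lra).
        exists (Rmin (t - T u1) (T u2 - t)). split; [apply Rmin_pos; lra|].
        intros y [_ Hy]. simpl in *; unfold R_dist in *.
        assert (Hy1 : Rabs (y - t) < t - T u1) by (eapply Rlt_le_trans; [exact Hy|apply Rmin_l]).
        assert (Hy2 : Rabs (y - t) < T u2 - t) by (eapply Rlt_le_trans; [exact Hy|apply Rmin_r]).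
        assert (Hb := Hbetw u1 u2 y ltac:(lra) ltac:(lra) ltac:(lra) ltac:(solve_abs)).
        assert (u - eps/2 <= u1) by (unfold u1; apply Rmax_l).
        assert (u2 <= u + eps/2) by (unfold u2; apply Rmin_l). solve_abs.
      + subst t. set (u1 := Rmax (zp - eps/2) ((zm+zp)/2)).
        assert (Hu1 : zm < u1 < zp) by (unfold u1, Rmax; destruct Rle_dec; lra).
        assert (HT1 := HAB u1 Hu1).
        exists (B - T u1). split; [lra|]. intros y [_ Hy]. simpl in *; unfold R_dist in *.
        rewrite (HgB B) by lra.
        destruct (Rle_dec B y). { rewrite HgB by auto. rewrite Rminus_diag, Rabs_R0; lra. }
        destruct (HB y) as [u2 [Hu2 Hu2y]]; [lra|].
        assert (u1 < u2).
        { destruct (Rle_dec u2 u1); [|lra]. destruct (Req_dec u2 u1) as [He|]; [rewrite He in *; solve_abs|].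
          assert (T u2 < T u1) by (apply Tm; lra). solve_abs. }
        assert (Hb := Hbetw u1 u2 y ltac:(lra) ltac:(lra) ltac:(lra) ltac:(solve_abs)).
        assert (zp - eps/2 <= u1) by (unfold u1; apply Rmax_l). solve_abs.
      + exists (t - B). split; [lra|]. intros y [_ Hy]. simpl in *; unfold R_dist in *.
        rewrite !HgB by solve_abs. rewrite Rminus_diag, Rabs_R0; lra. }
  exists chi. split; [auto|]. split; [auto|]. split; [auto|]. split; [auto|]. split; [auto|].
  intros t Ht. destruct (Hin t Ht) as [Hct HTt]. set (u := chi t) in *.
  destruct (HT u Hct) as [HdT Hfu]. set (fu := f u) in *.
  apply is_derive_Reals. intros eps Heps.
  apply is_derive_Reals in HdT.
  set (e1 := Rmin (fu/2) (eps * fu * fu / 4)).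
  assert (He1 : 0 < e1) by (unfold e1; apply Rmin_pos; [lra| apply Rdiv_lt_0_compat; [repeat apply Rmult_lt_0_compat|]; lra]).
  destruct (HdT e1 He1) as [d1 Hd1].
  destruct (Hcont t d1 (cond_pos d1)) as [d2 [Hd2 Hd2']].
  assert (Hd : 0 < Rmin d2 (Rmin (t - A) (B - t))) by (repeat apply Rmin_pos; lra).
  exists (mkposreal _ Hd). intros h Hh0 Hh. simpl in Hh.
  assert (Hhd2 : Rabs h < d2) by (eapply Rlt_le_trans; [exact Hh| apply Rmin_l]).
  assert (Hh3 : Rabs h < Rmin (t - A) (B - t)) by (eapply Rlt_le_trans; [exact Hh| apply Rmin_r]).
  assert (Hh4 : Rabs h < t - A) by (eapply Rlt_le_trans; [exact Hh3| apply Rmin_l]).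
  assert (Hh5 : Rabs h < B - t) by (eapply Rlt_le_trans; [exact Hh3| apply Rmin_r]).
  assert (Hth : A < t + h < B) by solve_abs.
  destruct (Hin (t+h) Hth) as [Hcth HTth].
  set (kk := chi (t + h) - u).
  assert (Hkk : kk <> 0).
  { intros Hk. assert (chi (t+h) = u) by (unfold kk in Hk; lra). rewrite H in HTth. lra. }
  assert (Hkd : Rabs kk < d1).
  { unfold kk. apply (Hd2' (t+h)). split.
    - unfold D_x, no_cond; split; auto. intros He; apply Hh0; lra.
    - simpl; unfold R_dist. replace (t + h - t) with h by ring. auto. }
  pose proof (Hd1 kk Hkk Hkd) as Hq.
  replace (u + kk) with (chi (t+h)) in Hq by (unfold kk; ring).
  rewrite HTth in Hq. fold u in Hq. rewrite HTt in Hq.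
  replace (t + h - t) with h in Hq by ring.
  replace (chi (t + h) - chi t) with kk by (unfold kk, u; ring).
  assert (Hr : fu / 2 < h / kk).
  { assert (e1 <= fu/2) by apply Rmin_l. solve_abs. }
  assert (Hhk : h <> 0) by auto.
  replace (kk / h - / fu) with ((fu - h / kk) / ((h / kk) * fu)) by (field; repeat split; lra).
  rewrite Rabs_div by (apply Rgt_not_eq, Rmult_lt_0_compat; lra).
  rewrite (Rabs_right ((h/kk) * fu)) by (apply Rle_ge, Rmult_le_pos; lra).
  apply Rlt_le_trans with (e1 / ((h / kk) * fu)).
  - apply Rmult_lt_compat_r; [apply Rinv_0_lt_compat, Rmult_lt_0_compat; lra|].
    rewrite Rabs_minus_sym. auto.
  - assert (e1 <= eps * fu * fu / 4) by apply Rmin_r.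
    apply Rle_trans with ((eps * fu * fu / 4) / ((fu/2) * fu)).
    + unfold Rdiv. apply Rmult_le_compat; try lra.
      * left; apply Rinv_0_lt_compat, Rmult_lt_0_compat; lra.
      * apply Rinv_le_contravar; [apply Rmult_lt_0_compat; lra|].
        apply Rmult_le_compat_r; lra.
    + replace (eps * fu * fu / 4 / (fu / 2 * fu)) with (eps / 2) by (field; lra). lra.
Qed.

Lemma Rpower_sq y c : 0 < y -> Rpower (y ^ 2) c = Rpower y (2 * c).
Proof.
  intros Hy. rewrite <- Rpower_mult. f_equal. rewrite <- Rpower_pow by auto.
  simpl; ring_simplify; auto.
Qed.

Lemma Rpower_le_base a b c : 0 <= c -> 0 < a -> a <= b -> Rpower a c <= Rpower b c.
Proof. intros. apply Rle_Rpower_l; auto. Qed.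

Lemma compare_deriv (T f K dK : R -> R) s r :
  s <= r ->
  (forall x, s <= x <= r -> is_derive T x (f x)) ->
  (forall x, s <= x <= r -> is_derive K x (dK x)) ->
  (forall x, s < x < r -> f x <= dK x) ->
  T r - T s <= K r - K s.
Proof.
  intros Hsr HT HK Hle.
  assert (H : (fun x => K x - T x) s <= (fun x => K x - T x) r).
  { apply (mono_deriv (fun x => K x - T x) (fun x => dK x - f x)); auto.
    - intros x Hx. apply (is_derive_minus K T x); [apply HK|apply HT]; lra.
    - intros x Hx. apply cont_of_derive with (dK x - f x).
      apply (is_derive_minus K T x); [apply HK|apply HT]; lra.
    - intros x Hx. specialize (Hle x Hx). lra. }
  simpl in H. lra.
Qed.

Lemma time_map (Gf g : R -> R) (zm zp k p : R) :
  (forall u, is_derive Gf u (g u)) ->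
  (forall u, continuity_pt g u) ->
  zm < zp -> Gf zp = Gf zm ->
  (forall u, zm < u < zp -> Gf zm < Gf u) ->
  g zp < 0 ->
  (exists a d, 0 < a /\ 0 < d /\ forall s, zm < s < zm + d -> a * (s - zm) ^ 2 <= Gf s - Gf zm) ->
  0 < k -> 2 < p ->
  exists T A B,
    (forall u, zm < u < zp -> is_derive T u (/ Rpower ((Gf u - Gf zm) / k) (/ p))
                               /\ 0 < / Rpower ((Gf u - Gf zm) / k) (/ p)) /\
    (forall u, zm < u < zp -> A < T u < B) /\
    (forall t, A < t -> exists u, zm < u < zp /\ T u < t) /\
    (forall t, t < B -> exists u, zm < u < zp /\ t < T u).
Proof.
  intros Hd Hgc Hz HGz HGpos Hgzp [a [d [Ha [Hdd Hlow]]]] Hk Hp.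
  set (f := fun u => / Rpower ((Gf u - Gf zm) / k) (/ p)).
  assert (Hfpos : forall u, 0 < f u) by (intros; apply Rinv_0_lt_compat, Rpower_pos).
  assert (Hfc : forall u, zm < u < zp -> continuity_pt f u).
  { intros u Hu.
    assert (Hw : 0 < (Gf u - Gf zm) / k) by (apply Rdiv_lt_0_compat; [specialize (HGpos u Hu)|]; lra).
    assert (Hi : is_derive (fun y => (Gf y - Gf zm) / k) u (g u / k)).
    { apply is_derive_Reals. unfold Rdiv.
      apply (derivable_pt_lim_scal_right (fun y => Gf y - Gf zm)).
      replace (g u) with (g u - 0) by ring. apply derivable_pt_lim_minus.
      - apply is_derive_Reals, Hd.
      - apply derivable_pt_lim_const. }
    pose proof (is_derive_Rpower_comp _ u _ (/ p) Hw Hi) as HR.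
    apply cont_of_derive with (l := - (/ p * Rpower ((Gf u - Gf zm) / k) (/ p - 1) * (g u / k))
        / (Rpower ((Gf u - Gf zm) / k) (/ p)) ^ 2).
    unfold f. apply (is_derive_inv (fun y => Rpower ((Gf y - Gf zm) / k) (/ p))); auto.
    apply Rgt_not_eq, Rpower_pos. }
  set (m0 := (zm + zp) / 2).
  assert (Hm0 : zm < m0 < zp) by (unfold m0; lra).
  set (T := fun u => RInt f m0 u).
  assert (HT : forall u, zm < u < zp -> is_derive T u (f u)).
  { intros u Hu. apply (is_derive_RInt f T m0 u).
    - apply loc_of_ball with (Rmin (u - zm) (zp - u)); [apply Rmin_pos; lra|].
      intros b Hb. unfold T. apply (@RInt_correct R_CompleteNormedModule f m0 b). apply (@ex_RInt_continuous R_CompleteNormedModule f).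
      assert (Hb1 : Rabs (b - u) < u - zm) by (eapply Rlt_le_trans; [exact Hb| apply Rmin_l]).
      assert (Hb2 : Rabs (b - u) < zp - u) by (eapply Rlt_le_trans; [exact Hb| apply Rmin_r]).
      intros z Hz'. apply continuity_pt_filterlim. apply Hfc.
      unfold m0 in *. unfold Rmin, Rmax in Hz'; destruct Rle_dec; solve_abs.
    - apply continuity_pt_filterlim. apply Hfc; auto. }
  assert (Tm : forall u v, zm < u -> u < v -> v < zp -> T u < T v).
  { intros u v H1 H2 H3. apply smono_deriv with f; auto.
    - intros x Hx; apply HT; lra.
    - intros x Hx; apply cont_of_derive with (f x); apply HT; lra. }
  set (m1 := Rmin (zm + d / 2) m0).
  assert (Hm1 : zm < m1 <= m0) by (unfold m1, m0, Rmin; destruct Rle_dec; lra).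
  assert (Hm1d : m1 < zm + d) by (unfold m1; pose proof (Rmin_l (zm + d/2) m0); lra).
  set (cA := Rpower (a / k) (/ p)).
  assert (HcA : 0 < cA) by apply Rpower_pos.
  set (K := fun x => / ((1 - 2 / p) * cA) * Rpower (x - zm) (1 - 2 / p)).
  set (dK := fun x => / ((1 - 2 / p) * cA) * ((1 - 2 / p) * Rpower (x - zm) (1 - 2 / p - 1) * 1)).
  assert (H2p : 0 < 1 - 2 / p) by (apply Rlt_Rminus; apply (Rmult_lt_reg_r p); [lra|]; unfold Rdiv; rewrite Rmult_assoc, Rinv_l; lra).
  assert (HK : forall x, zm < x -> is_derive K x (dK x)).
  { intros x Hx. unfold K, dK. apply is_derive_scal.
    apply (is_derive_Rpower_comp (fun x => x - zm)); [lra|].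
    apply is_derive_Reals. replace 1 with (1 - 0) at 1 by ring. apply derivable_pt_lim_minus.
    apply derivable_pt_lim_id. apply derivable_pt_lim_const. }
  assert (HfK : forall x, zm < x < zm + d -> x < zp -> f x <= dK x).
  { intros x Hx Hxz. unfold f, dK.
    replace (1 - 2 / p - 1) with (- (2 / p)) by ring. rewrite Rpower_Ropp.
    replace (/ ((1 - 2 / p) * cA) * ((1 - 2 / p) * / Rpower (x - zm) (2 / p) * 1))
      with (/ (cA * Rpower (x - zm) (2 / p))) by (field; split; [apply Rgt_not_eq, Rpower_pos|lra]).
    apply Rinv_le_contravar; [apply Rmult_lt_0_compat; [auto|apply Rpower_pos]|].
    unfold cA. replace (2 / p) with (2 * / p) by (unfold Rdiv; ring).
    rewrite <- Rpower_sq by lra. rewrite Rpower_mult_distr by (try apply Rdiv_lt_0_compat; try apply pow_lt; lra).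
    apply Rpower_le_base; [left; apply Rinv_0_lt_compat; lra| |].
    - apply Rmult_lt_0_compat; [apply Rdiv_lt_0_compat; lra| apply pow_lt; lra].
    - specialize (Hlow x Hx). unfold Rdiv. 
      replace (a * / k * (x - zm) ^ 2) with ((a * (x - zm) ^ 2) * / k) by ring.
      apply Rmult_le_compat_r; [left; apply Rinv_0_lt_compat; lra| lra]. }
  assert (Hlb : forall u, zm < u < zp -> T m1 - K m1 <= T u).
  { intros u Hu. destruct (Rle_dec m1 u).
    - assert (T m1 <= T u) by (destruct (Req_dec m1 u) as [->|]; [lra| left; apply Tm; lra]).
      assert (0 < K m1) by (unfold K; apply Rmult_lt_0_compat; [apply Rinv_0_lt_compat, Rmult_lt_0_compat; lra| apply Rpower_pos]).
      lra.
    - assert (Hc : T m1 - T u <= K m1 - K u).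
      { apply compare_deriv with (f := f) (dK := dK); try lra.
        - intros x Hx; apply HT; lra.
        - intros x Hx; apply HK; lra.
        - intros x Hx; apply HfK; lra. }
      assert (0 < K u) by (unfold K; apply Rmult_lt_0_compat; [apply Rinv_0_lt_compat, Rmult_lt_0_compat; lra| apply Rpower_pos]).
      lra. }
  set (b := - g zp / 2).
  assert (Hb : 0 < b) by (unfold b; lra).
  destruct (Hgc zp b Hb) as [d2 [Hd2 Hd2']].
  assert (Hgb : forall x, zp - d2 < x <= zp -> g x <= - b).
  { intros x Hx. destruct (Req_dec x zp) as [->|Hne]; [unfold b; lra|].
    assert (Hh := Hd2' x). simpl in Hh. unfold R_dist, D_x, no_cond in Hh.
    assert (Rabs (g x - g zp) < b) by (apply Hh; split; [split; auto| solve_abs]).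
    unfold b in *. solve_abs. }
  assert (Hup : forall s, zp - d2 < s < zp -> b * (zp - s) <= Gf s - Gf zm).
  { intros s Hs.
    assert (Hm : (fun x => Gf x + b * x) zp <= (fun x => Gf x + b * x) s).
    { apply Ropp_le_cancel.
      apply (mono_deriv (fun x => - (Gf x + b * x)) (fun x => - (g x + b * 1))); [lra| | |].
      - intros x Hx. apply (is_derive_opp (fun x => Gf x + b * x)).
        apply (is_derive_plus Gf (fun x => b * x)); [apply Hd|].
        apply is_derive_scal. apply is_derive_Reals, derivable_pt_lim_id.
      - intros x Hx. apply cont_of_derive with (- (g x + b * 1)).
        apply (is_derive_opp (fun x => Gf x + b * x)).
        apply (is_derive_plus Gf (fun x => b * x)); [apply Hd|].
        apply is_derive_scal. apply is_derive_Reals, derivable_pt_lim_id.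
      - intros x Hx. specialize (Hgb x ltac:(lra)). lra. }
    simpl in Hm. lra. }
  set (m2 := Rmax (zp - d2 / 2) m0).
  assert (Hm2 : m0 <= m2 < zp) by (unfold m2, m0, Rmax; destruct Rle_dec; lra).
  assert (Hm2d : zp - d2 < m2) by (unfold m2; pose proof (Rmax_l (zp - d2/2) m0); lra).
  set (cB := Rpower (b / k) (/ p)).
  assert (HcB : 0 < cB) by apply Rpower_pos.
  assert (H1p : 0 < 1 - 1 / p) by (apply Rlt_Rminus; apply (Rmult_lt_reg_r p); [lra|]; unfold Rdiv; rewrite Rmult_assoc, Rinv_l; lra).
  set (K2 := fun x => - (/ ((1 - 1 / p) * cB) * Rpower (zp - x) (1 - 1 / p))).
  set (dK2 := fun x => - (/ ((1 - 1 / p) * cB) * ((1 - 1 / p) * Rpower (zp - x) (1 - 1 / p - 1) * (-1)))).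
  assert (HK2 : forall x, x < zp -> is_derive K2 x (dK2 x)).
  { intros x Hx. unfold K2, dK2.
    apply (is_derive_opp (fun x => / ((1 - 1 / p) * cB) * Rpower (zp - x) (1 - 1 / p))).
    apply is_derive_scal.
    apply (is_derive_Rpower_comp (fun x => zp - x)); [lra|].
    apply is_derive_Reals. replace (-1) with (0 - 1) by ring. apply derivable_pt_lim_minus.
    apply derivable_pt_lim_const. apply derivable_pt_lim_id. }
  assert (HfK2 : forall x, zp - d2 < x < zp -> zm < x -> f x <= dK2 x).
  { intros x Hx Hxz. unfold f, dK2.
    replace (1 - 1 / p - 1) with (- (1 / p)) by ring. rewrite Rpower_Ropp.
    replace (- (/ ((1 - 1 / p) * cB) * ((1 - 1 / p) * / Rpower (zp - x) (1 / p) * -1)))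
      with (/ (cB * Rpower (zp - x) (1 / p))) by (field; split; [apply Rgt_not_eq, Rpower_pos|lra]).
    apply Rinv_le_contravar; [apply Rmult_lt_0_compat; [auto|apply Rpower_pos]|].
    unfold cB. replace (1 / p) with (/ p) by (unfold Rdiv; ring).
    rewrite Rpower_mult_distr by (try apply Rdiv_lt_0_compat; lra).
    apply Rpower_le_base; [left; apply Rinv_0_lt_compat; lra| |].
    - apply Rmult_lt_0_compat; [apply Rdiv_lt_0_compat; lra| lra].
    - specialize (Hup x Hx). unfold Rdiv.
      replace (b * / k * (zp - x)) with ((b * (zp - x)) * / k) by ring.
      apply Rmult_le_compat_r; [left; apply Rinv_0_lt_compat; lra| lra]. }
  assert (Hub : forall u, zm < u < zp -> T u <= T m2 - K2 m2).
  { intros u Hu.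
    assert (0 < - K2 m2) by (unfold K2; rewrite Ropp_involutive; apply Rmult_lt_0_compat; [apply Rinv_0_lt_compat, Rmult_lt_0_compat; lra| apply Rpower_pos]).
    destruct (Rle_dec u m2).
    - assert (T u <= T m2) by (destruct (Req_dec u m2) as [->|]; [lra| left; apply Tm; lra]).
      lra.
    - assert (Hc : T u - T m2 <= K2 u - K2 m2).
      { apply compare_deriv with (f := f) (dK := dK2); try lra.
        - intros x Hx; apply HT; lra.
        - intros x Hx; apply HK2; lra.
        - intros x Hx; apply HfK2; lra. }
      assert (0 < - K2 u) by (unfold K2; rewrite Ropp_involutive; apply Rmult_lt_0_compat; [apply Rinv_0_lt_compat, Rmult_lt_0_compat; lra| apply Rpower_pos]).
      lra. }
  set (EB := fun y => exists u, zm < u < zp /\ y = T u).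
  destruct (completeness EB) as [B [HB1 HB2]].
  { exists (T m2 - K2 m2). intros y [u [Hu ->]]. apply Hub; auto. }
  { exists (T m0). exists m0. split; [unfold m0; lra| auto]. }
  set (EA := fun y => exists u, zm < u < zp /\ y = - T u).
  destruct (completeness EA) as [mA [HA1 HA2]].
  { exists (- (T m1 - K m1)). intros y [u [Hu ->]]. specialize (Hlb u Hu). lra. }
  { exists (- T m0). exists m0. split; [unfold m0; lra| auto]. }
  exists T, (- mA), B. split; [|split; [|split]].
  - intros u Hu. split; [apply HT; auto| apply Hfpos].
  - intros u Hu. split.
    + assert (Hu' : zm < (zm + u) / 2 < zp) by lra.
      assert (- T ((zm + u)/2) <= mA) by (apply HA1; exists ((zm+u)/2); split; auto).
      assert (T ((zm + u) / 2) < T u) by (apply Tm; lra). lra.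
    + assert (Hu' : zm < (u + zp) / 2 < zp) by lra.
      assert (T ((u + zp)/2) <= B) by (apply HB1; exists ((u+zp)/2); split; auto).
      assert (T u < T ((u + zp) / 2)) by (apply Tm; lra). lra.
  - intros t Ht. apply NNPP. intros Hn.
    assert (Hub' : is_upper_bound EA (- t)).
    { intros y [u [Hu ->]]. destruct (Rle_dec t (T u)); [lra|].
      exfalso. apply Hn. exists u. split; auto; lra. }
    specialize (HA2 _ Hub'). lra.
  - intros t Ht. apply NNPP. intros Hn.
    assert (Hub' : is_upper_bound EB t).
    { intros y [u [Hu ->]]. destruct (Rle_dec (T u) t); [lra|].
      exfalso. apply Hn. exists u. split; auto; lra. }
    specialize (HB2 _ Hub'). lra.
Qed.

Lemma is_derive_compR (f g : R -> R) x df dg :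
  is_derive f (g x) df -> is_derive g x dg -> is_derive (fun y => f (g y)) x (dg * df).
Proof. intros H1 H2. exact (is_derive_comp f g x df dg H1 H2). Qed.

Lemma is_derive_lin (c s x : R) : is_derive (fun y => c + s * y) x s.
Proof.
  apply is_derive_Reals. intros eps Heps. exists (mkposreal 1 Rlt_0_1).
  intros h Hh _. replace ((c + s * (x + h) - (c + s * x)) / h - s) with 0 by (field; auto).
  rewrite Rabs_R0; auto.
Qed.

Lemma is_derive_cst (c x : R) : is_derive (fun _ => c) x 0.
Proof. apply is_derive_Reals. apply derivable_pt_lim_const. Qed.

Lemma cont_use (f : R -> R) x : continuity_pt f x -> forall eps, 0 < eps ->
  exists eta, 0 < eta /\ forall y, Rabs (y - x) < eta -> Rabs (f y - f x) < eps.
Proof.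
  intros H eps Heps. destruct (H eps Heps) as [eta [Heta Hq]]. exists eta. split; auto.
  intros y Hy. destruct (Req_dec y x) as [->|Hne].
  - rewrite Rminus_diag, Rabs_R0; auto.
  - apply (Hq y). split; [split; [exact I| auto]| exact Hy].
Qed.

Lemma phi_p_eq p sg w : 2 < p -> (sg = 1 \/ sg = -1) ->
  phi_p p (sg * rpow w (/ p)) = sg * rpow w ((p - 1) / p).
Proof.
  intros Hp Hsg. unfold phi_p.
  destruct (Rlt_dec 0 w).
  - rewrite (rpow_pos w (/ p)), (rpow_pos w ((p - 1) / p)) by auto.
    assert (Habs : Rabs (sg * Rpower w (/ p)) = Rpower w (/ p)).
    { rewrite Rabs_mult. rewrite (Rabs_right (Rpower _ _)) by (left; apply Rpower_pos).
      destruct Hsg as [->| ->]; [rewrite Rabs_R1| rewrite (Rabs_left (-1)) by lra]; ring. }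
    rewrite Habs. rewrite rpow_pos by apply Rpower_pos.
    rewrite Rpower_mult.
    transitivity (sg * (Rpower w (/ p * (p - 2)) * Rpower w (/ p))); [ring|].
    rewrite <- Rpower_plus. f_equal. f_equal. field. lra.
  - rewrite (rpow_npos w (/ p)), (rpow_npos w ((p - 1) / p)) by lra. ring.
Qed.

Lemma pulse_core (Gf g : R -> R) (zm zp e p : R) :
  (forall u, is_derive Gf u (g u)) ->
  (forall u, continuity_pt g u) ->
  zm < zp -> Gf zp = Gf zm ->
  (forall u, zm < u < zp -> Gf zm < Gf u) ->
  g zm = 0 -> g zp < 0 ->
  (exists a d, 0 < a /\ 0 < d /\ forall s, zm < s < zm + d -> a * (s - zm) ^ 2 <= Gf s - Gf zm) ->
  0 < e -> 2 < p ->
  exists psi om, 0 < om /\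
    (forall x, ex_derive psi x) /\
    (forall x, is_derive (fun y => phi_p p (Derive psi y)) x (g (psi x) / e)) /\
    psi 0 = zp /\
    (forall x, zm <= psi x <= zp) /\
    (forall x, (x <= - om \/ om <= x) -> psi x = zm) /\
    (forall x, - om < x < 0 -> 0 < Derive psi x) /\
    (forall x, 0 < x < om -> Derive psi x < 0).
Proof.
  intros Hd Hgc Hz HGz HGpos Hgzm Hgzp Hlow He Hp.
  set (k := e * (p - 1) / p).
  assert (Hk : 0 < k) by (unfold k; apply Rdiv_lt_0_compat; [apply Rmult_lt_0_compat|]; lra).
  destruct (time_map Gf g zm zp k p Hd Hgc Hz HGz HGpos Hgzp Hlow Hk Hp)
    as [T [A [B [HT [HAB [HA HB]]]]]].
  set (f := fun u => / Rpower ((Gf u - Gf zm) / k) (/ p)).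
  destruct (inverse_exists T f zm zp A B Hz HT HAB HA HB)
    as [chi [Hrg [HlA [HgB [Hin [Hcc Hdc]]]]]].
  assert (HAB' : A < B) by (assert (Hm : zm < (zm+zp)/2 < zp) by lra; pose proof (HAB _ Hm); lra).
  set (om := B - A).
  assert (Hom : 0 < om) by (unfold om; lra).
  set (psi := fun x => chi (B - Rabs x)).
  set (Hf := fun u => Gf u - Gf zm).
  set (q := fun x => rpow (Hf (psi x) / k) (/ p)).
  set (r := fun x => rpow (Hf (psi x) / k) ((p - 1) / p)).
  set (sg := fun x : R => if Rlt_dec x 0 then 1 else -1).
  set (D := fun x => sg x * q x).
  assert (Hsg : forall x, sg x = 1 \/ sg x = -1) by (intros x; unfold sg; destruct Rlt_dec; auto).
  assert (Hpc : forall x, continuity_pt psi x).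
  { intros x. unfold psi. apply (continuity_pt_comp' chi (fun x => B - Rabs x) x); [|apply Hcc].
    apply continuity_pt_minus; [apply continuity_pt_const; intros ? ?; auto| apply Rcontinuity_abs]. }
  assert (HHfc : forall x, continuity_pt (fun y => Hf (psi y) / k) x).
  { intros x. unfold Hf. apply continuity_pt_mult; [|apply continuity_pt_const; intros ? ?; auto].
    apply continuity_pt_minus; [|apply continuity_pt_const; intros ? ?; auto].
    apply (continuity_pt_comp' Gf psi x); [apply Hpc|]. apply cont_of_derive with (g (psi x)); apply Hd. }
  assert (Hqc : forall x, continuity_pt q x).
  { intros x. unfold q. apply (continuity_pt_comp' (fun w => rpow w (/ p)) (fun y => Hf (psi y) / k) x);
    [apply HHfc| apply rpow_cont; apply Rinv_0_lt_compat; lra]. }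
  assert (Hrc : forall x, continuity_pt r x).
  { intros x. unfold r. apply (continuity_pt_comp' (fun w => rpow w ((p - 1) / p)) (fun y => Hf (psi y) / k) x);
    [apply HHfc| apply rpow_cont; apply Rdiv_lt_0_compat; lra]. }
  assert (Hgpc : forall x, continuity_pt (fun y => g (psi y)) x).
  { intros x. apply (continuity_pt_comp' g psi x); [apply Hpc| apply Hgc]. }
  assert (Hpout : forall x, om <= Rabs x -> psi x = zm).
  { intros x Hx. unfold psi. apply HlA. unfold om in Hx. lra. }
  assert (Hp0 : psi 0 = zp). { unfold psi. rewrite Rabs_R0, Rminus_0_r. apply HgB; lra. }
  assert (Hpin : forall x, Rabs x < om -> x <> 0 -> zm < psi x < zp /\ T (psi x) = B - Rabs x).
  { intros x Hx Hx0. unfold psi. apply Hin. unfold om in Hx. split; [lra|].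
    assert (Rabs x > 0) by (apply Rabs_pos_lt; auto). lra. }
  assert (Hq0 : forall x, (Rabs x = om \/ x = 0) -> q x = 0).
  { intros x Hx. unfold q, Hf. apply rpow_npos.
    destruct Hx as [Hx| ->].
    - rewrite Hpout by lra. rewrite Rminus_diag. unfold Rdiv; rewrite Rmult_0_l; lra.
    - rewrite Hp0, HGz, Rminus_diag. unfold Rdiv; rewrite Rmult_0_l; lra. }
  assert (Hr0 : forall x, (Rabs x = om \/ x = 0) -> r x = 0).
  { intros x Hx. unfold r, Hf. apply rpow_npos.
    destruct Hx as [Hx| ->].
    - rewrite Hpout by lra. rewrite Rminus_diag. unfold Rdiv; rewrite Rmult_0_l; lra.
    - rewrite Hp0, HGz, Rminus_diag. unfold Rdiv; rewrite Rmult_0_l; lra. }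
  assert (Hwpos : forall x, Rabs x < om -> x <> 0 -> 0 < Hf (psi x) / k).
  { intros x Hx Hx0. destruct (Hpin x Hx Hx0) as [Hi _]. unfold Hf.
    apply Rdiv_lt_0_compat; [specialize (HGpos _ Hi)|]; lra. }
  assert (Hfinv : forall x, Rabs x < om -> x <> 0 -> / f (psi x) = q x).
  { intros x Hx Hx0. unfold f, q. rewrite Rinv_inv. rewrite rpow_pos; [auto| apply Hwpos; auto]. }
  assert (HDn : forall x, Rabs x <> om -> x <> 0 -> is_derive psi x (D x)).
  { intros x Hx1 Hx0. destruct (Rlt_dec (Rabs x) om) as [Hl|Hl].
    - destruct (Rlt_dec x 0) as [Hneg|Hpos].
      + apply is_derive_ext_loc with (f := fun y => chi (B + 1 * y)).
        * apply loc_of_ball with (- x); [lra|]. intros y Hy. unfold psi.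
          rewrite Rabs_left by solve_abs. f_equal; ring.
        * unfold D, sg. destruct (Rlt_dec x 0); [|lra].
          replace (1 * q x) with (1 * / f (chi (B + 1 * x))).
          -- apply is_derive_compR; [|apply is_derive_lin]. apply Hdc.
             rewrite Rabs_left in Hl by lra. unfold om in Hl. lra.
          -- f_equal. rewrite <- Hfinv by auto. unfold psi. rewrite Rabs_left by lra. f_equal. f_equal. f_equal. ring.
      + assert (0 < x) by lra.
        apply is_derive_ext_loc with (f := fun y => chi (B + (-1) * y)).
        * apply loc_of_ball with x; [lra|]. intros y Hy. unfold psi.
          rewrite Rabs_right by solve_abs. f_equal; ring.
        * unfold D, sg. destruct (Rlt_dec x 0); [lra|].
          replace (-1 * q x) with (-1 * / f (chi (B + -1 * x))).
          -- apply is_derive_compR; [|apply is_derive_lin]. apply Hdc.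
             rewrite Rabs_right in Hl by lra. unfold om in Hl. lra.
          -- f_equal. rewrite <- Hfinv by auto. unfold psi. rewrite Rabs_right by lra. f_equal. f_equal. f_equal. ring.
    - assert (Hgt : om < Rabs x) by lra.
      apply is_derive_ext_loc with (f := fun _ => zm).
      + apply loc_of_ball with (Rabs x - om); [lra|]. intros y Hy. symmetry. apply Hpout. solve_abs.
      + replace (D x) with 0.
        * apply is_derive_cst.
        * unfold D, q, Hf. rewrite Hpout by lra. rewrite Rminus_diag. unfold Rdiv; rewrite Rmult_0_l.
          rewrite rpow_npos by lra. ring. }
  assert (HD : forall x, is_derive psi x (D x)).
  { intros x. destruct (Req_dec (Rabs x) om) as [Hx|Hx]; [|destruct (Req_dec x 0) as [Hx0|Hx0]].
    3: apply HDn; auto.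
    all: assert (HDx : D x = 0) by (unfold D; rewrite Hq0; [ring| tauto]).
    all: rewrite HDx; apply deriv_limit with (d := D); [apply Hpc| |].
    all: try (exists (om / 2); split; [lra|]; intros y Hyx Hy; apply HDn; [solve_abs| solve_abs]).
    all: intros eps Heps; destruct (cont_use _ _ (Hqc x) eps Heps) as [eta [Heta Hq]];
         exists eta; split; auto; intros y Hyx Hy;
         assert (Hqq : Rabs (q y - q x) < eps) by (apply Hq; auto);
         rewrite (Hq0 x) in Hqq by tauto; rewrite Rminus_0_r in Hqq; unfold D; rewrite Rminus_0_r, Rabs_mult;
         destruct (Hsg y) as [-> | ->]; [rewrite Rabs_R1| rewrite (Rabs_left (-1)) by lra]; lra. }
  assert (HDer : forall x, Derive psi x = D x) by (intros x; apply is_derive_unique, HD).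
  assert (Hflux : forall y, phi_p p (Derive psi y) = sg y * r y).
  { intros y. rewrite HDer. unfold D, q, r. apply phi_p_eq; auto. }
  assert (Hdw : forall x, is_derive (fun y => Hf (psi y) / k) x (D x * g (psi x) / k)).
  { intros x. unfold Hf. apply is_derive_Reals. unfold Rdiv.
    apply (derivable_pt_lim_scal_right (fun y => Gf (psi y) - Gf zm)).
    replace (D x * g (psi x)) with (D x * g (psi x) - 0) by ring. apply derivable_pt_lim_minus.
    - apply is_derive_Reals. apply is_derive_compR; [apply Hd| apply HD].
    - apply derivable_pt_lim_const. }
  assert (Hkey : forall x, Rabs x < om -> x <> 0 ->
     (p - 1) / p * Rpower (Hf (psi x) / k) ((p - 1) / p - 1) * (D x * g (psi x) / k)
       = sg x * (g (psi x) / e)).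
  { intros x Hx Hx0. unfold D, q. rewrite rpow_pos by (apply Hwpos; auto).
    set (w := Hf (psi x) / k).
    transitivity (sg x * ((p - 1) / p * (Rpower w ((p - 1) / p - 1) * Rpower w (/ p)) * g (psi x) / k)); [field; lra|].
    rewrite <- Rpower_plus. replace ((p - 1) / p - 1 + / p) with 0 by (field; lra).
    rewrite Rpower_O by (apply Hwpos; auto). unfold k. field. split; lra. }
  assert (HFn : forall x, Rabs x <> om -> x <> 0 -> is_derive (fun y => sg y * r y) x (g (psi x) / e)).
  { intros x Hx1 Hx0. destruct (Rlt_dec (Rabs x) om) as [Hl|Hl].
    - assert (Hx' : forall y, Rabs (y - x) < Rmin (Rabs x) (om - Rabs x) -> sg y = sg x /\ r y = Rpower (Hf (psi y) / k) ((p - 1) / p)).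
      { intros y Hy.
        assert (Hy1 : Rabs (y - x) < Rabs x) by (eapply Rlt_le_trans; [exact Hy| apply Rmin_l]).
        assert (Hy2 : Rabs (y - x) < om - Rabs x) by (eapply Rlt_le_trans; [exact Hy| apply Rmin_r]).
        split.
        - unfold sg. destruct (Rlt_dec y 0), (Rlt_dec x 0); auto; solve_abs.
        - unfold r. apply rpow_pos. apply Hwpos; [solve_abs|]. intros ->. solve_abs. }
      assert (Hm : 0 < Rmin (Rabs x) (om - Rabs x)) by (apply Rmin_pos; [apply Rabs_pos_lt; auto| lra]).
      apply is_derive_ext_loc with (f := fun y => sg x * Rpower (Hf (psi y) / k) ((p - 1) / p)).
      + apply loc_of_ball with (Rmin (Rabs x) (om - Rabs x)); auto.
        intros y Hy. destruct (Hx' y Hy) as [-> ->]. auto.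
      + replace (g (psi x) / e) with (sg x * (sg x * (g (psi x) / e)))
          by (destruct (Hsg x) as [-> | ->]; ring).
        apply is_derive_scal. rewrite <- Hkey by auto.
        apply (is_derive_Rpower_comp (fun y => Hf (psi y) / k)); [apply Hwpos; auto| apply Hdw].
    - assert (Hgt : om < Rabs x) by lra.
      apply is_derive_ext_loc with (f := fun _ => 0).
      + apply loc_of_ball with (Rabs x - om); [lra|]. intros y Hy.
        cbv beta. unfold r, Hf. rewrite Hpout by solve_abs. rewrite Rminus_diag. unfold Rdiv; rewrite Rmult_0_l.
        rewrite rpow_npos by lra. rewrite Rmult_0_r; reflexivity.
      + rewrite Hpout by lra. rewrite Hgzm. unfold Rdiv; rewrite Rmult_0_l. apply is_derive_cst. }
  assert (HF : forall x, is_derive (fun y => sg y * r y) x (g (psi x) / e)).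
  { intros x. destruct (Req_dec (Rabs x) om) as [Hx|Hx]; [|destruct (Req_dec x 0) as [Hx0|Hx0]].
    3: apply HFn; auto.
    all: apply deriv_limit with (d := fun y => g (psi y) / e).
    all: try (exists (om / 2); split; [lra|]; intros y Hyx Hy; apply HFn; [solve_abs| solve_abs]).
    all: try (intros eps Heps; destruct (cont_use _ _ (Hgpc x) (eps * e)) as [eta [Heta Hq]];
         [apply Rmult_lt_0_compat; lra|];
         exists eta; split; auto; intros y Hyx Hy;
         assert (Hqq : Rabs (g (psi y) - g (psi x)) < eps * e) by (apply Hq; auto);
         replace (g (psi y) / e - g (psi x) / e) with ((g (psi y) - g (psi x)) / e) by (field; lra);
         rewrite Rabs_div, (Rabs_right e) by lra;
         apply (Rmult_lt_reg_r e); [lra|]; unfold Rdiv; rewrite Rmult_assoc, Rinv_l; lra).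
    all: intros eps Heps; destruct (cont_use _ _ (Hrc x) eps Heps) as [eta [Heta Hq]];
         exists eta; split; auto; intros y [_ Hy];
         assert (Hqq : Rabs (r y - r x) < eps) by (apply Hq; auto);
         simpl; unfold R_dist; rewrite (Hr0 x) in * by tauto; rewrite Rmult_0_r, Rminus_0_r, Rabs_mult;
         rewrite Rminus_0_r in Hqq;
         destruct (Hsg y) as [-> | ->]; [rewrite Rabs_R1| rewrite (Rabs_left (-1)) by lra]; lra. }
  exists psi, om. split; [auto|]. split; [intros x; exists (D x); apply HD|].
  split; [intros x; eapply is_derive_ext; [intros y; symmetry; apply Hflux| apply HF]|].
  split; [auto|]. split; [intros x; apply Hrg|]. split; [intros x Hx; apply Hpout; solve_abs|].
  split.
  - intros x Hx. rewrite HDer. unfold D, sg. destruct (Rlt_dec x 0); [|lra]. rewrite Rmult_1_l.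
    unfold q. rewrite rpow_pos; [apply Rpower_pos|]. apply Hwpos; [solve_abs| lra].
  - intros x Hx. rewrite HDer. unfold D, sg. destruct (Rlt_dec x 0); [lra|].
    unfold q. rewrite rpow_pos; [|apply Hwpos; [solve_abs| lra]].
    pose proof (Rpower_pos (Hf (psi x) / k) (/ p)). lra.
Qed.

Definition F1 (th u : R) : R := - u * (1 - u ^ 2) * rpow (Rabs (1 - u ^ 2)) (th - 2).
Definition F2 (th u : R) : R := Rpower (1 - u ^ 2) (th - 2) * ((2 * th - 1) * u ^ 2 - 1).

Lemma is_derive_sq_w (u : R) : is_derive (fun y => 1 - y ^ 2) u (- (2 * u)).
Proof.
  apply is_derive_Reals. replace (- (2 * u)) with (0 - INR 2 * u ^ 1) by (simpl; ring).
  apply (derivable_pt_lim_minus (fun _ => 1) (fun y => y ^ 2)).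
  apply derivable_pt_lim_const. apply derivable_pt_lim_pow.
Qed.

Lemma F_deriv th u : 2 < th -> is_derive (F th) u (F1 th u).
Proof.
  intros Hth. unfold F, F1.
  replace (- u * (1 - u ^ 2) * rpow (Rabs (1 - u ^ 2)) (th - 2))
    with (/ (2 * th) * (- (2 * u) * (th * (1 - u ^ 2) * rpow (Rabs (1 - u ^ 2)) (th - 2))))
    by (field; lra).
  apply is_derive_scal.
  apply (is_derive_compR (fun w => rpow (Rabs w) th) (fun y => 1 - y ^ 2)).
  - apply is_derive_rpow_abs; auto.
  - apply is_derive_sq_w.
Qed.

Lemma is_derive_mulc (s x : R) : is_derive (fun y => s * y) x s.
Proof.
  apply is_derive_Reals. intros eps Heps. exists (mkposreal 1 Rlt_0_1).
  intros h Hh _. replace ((s * (x + h) - s * x) / h - s) with 0 by (field; auto).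
  rewrite Rabs_R0; auto.
Qed.

Lemma G_deriv th beta u : 2 < th -> is_derive (G th beta) u (F1 th u - beta).
Proof.
  intros Hth. unfold G. apply is_derive_Reals.
  apply (derivable_pt_lim_minus (F th) (fun y => beta * y)).
  - apply is_derive_Reals, F_deriv; auto.
  - apply is_derive_Reals, is_derive_mulc.
Qed.

Lemma DeriveG th beta u : 2 < th -> Derive (G th beta) u = F1 th u - beta.
Proof. intros; apply is_derive_unique, G_deriv; auto. Qed.

Lemma DeriveF th u : 2 < th -> Derive (F th) u = F1 th u.
Proof. intros; apply is_derive_unique, F_deriv; auto. Qed.


Lemma F1_cont th u : 2 < th -> continuity_pt (F1 th) u.
Proof.
  intros Hth. unfold F1.
  apply continuity_pt_mult.
  - apply continuity_pt_mult.
    + apply continuity_pt_opp, continuity_pt_id.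
    + apply cont_of_derive with (- (2 * u)). apply is_derive_sq_w.
  - apply (continuity_pt_comp' (fun w => rpow (Rabs w) (th - 2)) (fun y => 1 - y ^ 2) u).
    + apply cont_of_derive with (- (2 * u)). apply is_derive_sq_w.
    + apply rpow_abs_cont. lra.
Qed.

Lemma F1_inside th u : -1 < u < 1 -> F1 th u = - u * (1 - u ^ 2) * Rpower (1 - u ^ 2) (th - 2).
Proof.
  intros Hu. unfold F1. rewrite Rabs_right by nra. rewrite rpow_pos by nra. auto.
Qed.

Lemma F1_deriv th u : 2 < th -> -1 < u < 1 -> is_derive (F1 th) u (F2 th u).
Proof.
  intros Hth Hu.
  apply is_derive_ext_loc with (f := fun y => - y * (1 - y ^ 2) * Rpower (1 - y ^ 2) (th - 2)).
  - apply loc_of_ball with (Rmin (u + 1) (1 - u)); [apply Rmin_pos; lra|].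
    intros y Hy. symmetry. apply F1_inside.
    assert (Rabs (y - u) < u + 1) by (eapply Rlt_le_trans; [exact Hy| apply Rmin_l]).
    assert (Rabs (y - u) < 1 - u) by (eapply Rlt_le_trans; [exact Hy| apply Rmin_r]). solve_abs.
  - assert (Hw : 0 < 1 - u ^ 2) by nra.
    assert (H1 : is_derive (fun y => - y * (1 - y ^ 2)) u (3 * u ^ 2 - 1)).
    { apply is_derive_Reals. 
      replace (3 * u ^ 2 - 1) with ((-1) * (1 - u ^ 2) + (- u) * (- (2 * u))) by ring.
      apply (derivable_pt_lim_mult (fun y => - y) (fun y => 1 - y ^ 2)).
      + replace (-1) with (- (1)) by ring. apply (derivable_pt_lim_opp id), derivable_pt_lim_id.
      + apply is_derive_Reals, is_derive_sq_w. }
    pose proof (is_derive_Rpower_comp (fun y => 1 - y ^ 2) u _ (th - 2) Hw (is_derive_sq_w u)) as H2.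
    apply is_derive_Reals.
    replace (F2 th u) with ((3 * u ^ 2 - 1) * Rpower (1 - u ^ 2) (th - 2) +
                             (- u * (1 - u ^ 2)) * ((th - 2) * Rpower (1 - u ^ 2) (th - 2 - 1) * - (2 * u))).
    + apply (derivable_pt_lim_mult (fun y => - y * (1 - y ^ 2)) (fun y => Rpower (1 - y ^ 2) (th - 2))).
      * apply is_derive_Reals; auto.
      * apply is_derive_Reals; auto.
    + assert (E : Rpower (1 - u ^ 2) (th - 2) = (1 - u ^ 2) * Rpower (1 - u ^ 2) (th - 2 - 1)).
      { replace (th - 2) with (1 + (th - 2 - 1)) at 1 by ring. rewrite Rpower_plus, Rpower_1 by auto. auto. }
      unfold F2. rewrite E. ring.
Qed.

Lemma um_sq th : 1 < th -> (u_minus th) ^ 2 = / (2 * th - 1).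
Proof.
  intros Hth. unfold u_minus.
  replace ((- Rpower (2 * th - 1) (- / 2)) ^ 2) with (Rpower (2 * th - 1) (- / 2) * Rpower (2 * th - 1) (- / 2)) by ring.
  rewrite <- Rpower_plus. replace (- / 2 + - / 2) with (- (1)) by field.
  rewrite Rpower_Ropp, Rpower_1 by lra. auto.
Qed.

Lemma um_range th : 1 < th -> -1 < u_minus th < 0.
Proof.
  intros Hth. pose proof (um_sq th Hth) as Hs.
  assert (Hneg : u_minus th < 0) by (unfold u_minus; pose proof (Rpower_pos (2 * th - 1) (- / 2)); lra).
  assert (Hlt : / (2 * th - 1) < 1) by (rewrite <- Rinv_1; apply Rinv_lt_contravar; lra).
  split; [|auto]. nra.
Qed.

Lemma up_um th : u_plus th = - u_minus th.
Proof. unfold u_plus, u_minus. ring. Qed.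

Lemma F1_odd th u : F1 th (- u) = - F1 th u.
Proof. unfold F1. replace ((- u) ^ 2) with (u ^ 2) by ring. ring. Qed.

Lemma F_even th u : F th (- u) = F th u.
Proof. unfold F. replace ((- u) ^ 2) with (u ^ 2) by ring. auto. Qed.

Lemma F1_le0_left th u : u <= -1 -> F1 th u <= 0.
Proof.
  intros Hu. unfold F1. pose proof (rpow_nonneg (Rabs (1 - u ^ 2)) (th - 2)).
  assert (- u * (1 - u ^ 2) <= 0) by nra. nra.
Qed.

Lemma F1_le0_mid th u : 0 <= u <= 1 -> F1 th u <= 0.
Proof.
  intros Hu. unfold F1. pose proof (rpow_nonneg (Rabs (1 - u ^ 2)) (th - 2)).
  assert (- u * (1 - u ^ 2) <= 0) by nra. nra.
Qed.

Lemma F1_incr th x y : 2 < th -> -1 <= x -> x < y -> y <= u_minus th -> F1 th x < F1 th y.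
Proof.
  intros Hth Hx Hxy Hy. pose proof (um_range th ltac:(lra)) as Hr. pose proof (um_sq th ltac:(lra)) as Hs.
  apply smono_deriv with (F2 th); auto.
  - intros z Hz. apply F1_deriv; lra.
  - intros z Hz. apply F1_cont; lra.
  - intros z Hz. unfold F2. apply Rmult_lt_0_compat; [apply Rpower_pos|].
    assert (z ^ 2 > / (2 * th - 1)) by nra.
    assert ((2 * th - 1) * z ^ 2 > (2 * th - 1) * / (2 * th - 1)) by (apply Rmult_gt_compat_l; lra).
    rewrite Rinv_r in H0 by lra. lra.
Qed.

Lemma F1_decr th x y : 2 < th -> u_minus th <= x -> x < y -> y <= 0 -> F1 th y < F1 th x.
Proof.
  intros Hth Hx Hxy Hy. pose proof (um_range th ltac:(lra)) as Hr. pose proof (um_sq th ltac:(lra)) as Hs.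
  apply Ropp_lt_cancel.
  apply (smono_deriv (fun z => - F1 th z) (fun z => - F2 th z)); auto.
  - intros z Hz. apply (is_derive_opp (F1 th)). apply F1_deriv; lra.
  - intros z Hz. apply continuity_pt_opp. apply F1_cont; lra.
  - intros z Hz. unfold F2. rewrite <- Ropp_0. apply Ropp_lt_contravar.
    rewrite <- (Rmult_0_r (Rpower (1 - z ^ 2) (th - 2))).
    apply Rmult_lt_compat_l; [apply Rpower_pos|].
    assert (z ^ 2 < / (2 * th - 1)) by nra.
    assert ((2 * th - 1) * z ^ 2 < (2 * th - 1) * / (2 * th - 1)) by (apply Rmult_lt_compat_l; lra).
    rewrite Rinv_r in H0 by lra. lra.
Qed.

Lemma is_derive_idR (x : R) : is_derive (fun y => y) x 1.
Proof. apply is_derive_Reals, derivable_pt_lim_id. Qed.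

Lemma F_nonneg th u : 0 < th -> 0 <= F th u.
Proof.
  intros Hth. unfold F. apply Rmult_le_pos; [left; apply Rinv_0_lt_compat; lra| apply rpow_nonneg].
Qed.

Lemma F_one th : F th 1 = 0.
Proof. unfold F. rewrite rpow_npos; [ring|]. replace (1 - 1 ^ 2) with 0 by ring. rewrite Rabs_R0; lra. Qed.

Lemma G_cont th beta u : 2 < th -> continuity_pt (G th beta) u.
Proof. intros. apply cont_of_derive with (F1 th u - beta). apply G_deriv; auto. Qed.

Lemma zm_range th beta zm : 2 < th -> 0 < beta < F1 th (u_minus th) ->
  is_min_crit th beta zm -> F1 th zm = beta /\ -1 < zm < u_minus th.
Proof.
  intros Hth Hb [Hc Hmin]. rewrite DeriveG in Hc by auto.
  assert (HF : F1 th zm = beta) by lra. split; auto.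
  pose proof (um_range th ltac:(lra)) as Hr.
  split.
  - destruct (Rle_dec zm (-1)); [|lra]. pose proof (F1_le0_left th zm r). lra.
  - assert (HF1 : F1 th (-1) = 0) by (unfold F1; replace (1 - (-1) ^ 2) with 0 by ring; rewrite Rabs_R0, rpow_npos; lra).
    destruct (IVT (fun u => F1 th u - beta) (-1) (u_minus th)) as [z [Hz Hz0]].
    + intros u. apply continuity_pt_minus; [apply F1_cont; auto| apply continuity_pt_const; intros ? ?; auto].
    + lra.
    + simpl. lra.
    + simpl. lra.
    + simpl in Hz0. assert (zm <= z) by (apply Hmin; rewrite DeriveG by auto; lra).
      destruct (Req_dec z (u_minus th)) as [He|]; [rewrite He in Hz0; lra| lra].
Qed.

Lemma part1 th p eps beta zm : 2 < th -> 2 < p -> 0 < eps ->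
  0 < beta < F1 th (u_minus th) -> is_min_crit th beta zm ->
  exists psi, pulse_up th p eps beta zm psi.
Proof.
  intros Hth Hp Heps Hb Hmc.
  destruct (zm_range th beta zm Hth Hb Hmc) as [HFz [Hz1 Hz2]].
  pose proof (um_range th ltac:(lra)) as Hr. pose proof (um_sq th ltac:(lra)) as Hs.
  set (g := fun u => F1 th u - beta).
  set (Gf := G th beta).
  assert (Hd : forall u, is_derive Gf u (g u)) by (intros; apply G_deriv; auto).
  assert (Hgc : forall u, continuity_pt g u).
  { intros u. apply continuity_pt_minus; [apply F1_cont; auto| apply continuity_pt_const; intros ? ?; auto]. }
  assert (HGc : forall u, continuity_pt Gf u) by (intros; apply G_cont; auto).
  set (w := (zm + u_minus th) / 2).
  set (c := Rpower (1 - zm ^ 2) (th - 2) * ((2 * th - 1) * w ^ 2 - 1)).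
  assert (Hc : 0 < c).
  { unfold c. apply Rmult_lt_0_compat; [apply Rpower_pos|].
    assert (w ^ 2 > / (2 * th - 1)) by (unfold w; nra).
    assert ((2 * th - 1) * w ^ 2 > (2 * th - 1) * / (2 * th - 1)) by (apply Rmult_gt_compat_l; lra).
    rewrite Rinv_r in H0 by lra. lra. }
  assert (HF2 : forall s, zm <= s <= w -> c <= F2 th s).
  { intros s Hs'. unfold c, F2. apply Rmult_le_compat.
    - left; apply Rpower_pos.
    - assert (w ^ 2 > / (2 * th - 1)) by (unfold w; nra).
      assert ((2 * th - 1) * w ^ 2 > (2 * th - 1) * / (2 * th - 1)) by (apply Rmult_gt_compat_l; lra).
      rewrite Rinv_r in H0 by lra. lra.
    - apply Rpower_le_base; [lra| nra| unfold w in *; nra].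
    - assert (w ^ 2 <= s ^ 2) by (unfold w in *; nra). nra. }
  assert (Hg1 : forall s, zm <= s <= w -> c * (s - zm) <= g s).
  { intros s Hs'.
    assert (H := mono_deriv (fun x => F1 th x - c * x) (fun x => F2 th x - c * 1) zm s ltac:(lra)).
    simpl in H. unfold g. rewrite <- HFz.
    enough (F1 th zm - c * zm <= F1 th s - c * s) by lra. apply H.
    - intros x Hx. apply (is_derive_minus (F1 th) (fun x => c * x)).
      + apply F1_deriv; unfold w in *; lra.
      + apply is_derive_scal. apply is_derive_idR.
    - intros x Hx. apply continuity_pt_minus; [apply F1_cont; auto|].
      apply continuity_pt_scal, continuity_pt_id.
    - intros x Hx. specialize (HF2 x ltac:(lra)). lra. }
  assert (Hlow : forall s, zm < s <= w -> c / 2 * (s - zm) ^ 2 <= Gf s - Gf zm).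
  { intros s Hs'.
    assert (H := mono_deriv (fun x => Gf x - c / 2 * (x - zm) ^ 2) (fun x => g x - c * (x - zm)) zm s ltac:(lra)).
    simpl in H. enough (Gf zm - c / 2 * (zm - zm) ^ 2 <= Gf s - c / 2 * (s - zm) ^ 2) by (ring_simplify in H0; lra).
    apply H.
    - intros x Hx. apply (is_derive_minus Gf (fun x => c / 2 * (x - zm) ^ 2)); [apply Hd|].
      apply is_derive_Reals.
      replace (c * (x - zm)) with (c / 2 * (INR 2 * (x - zm) ^ 1 * 1)) by (simpl; field).
      apply (derivable_pt_lim_scal (fun x => (x - zm) ^ 2)).
      apply (derivable_pt_lim_comp (fun x => x - zm) (fun y => y ^ 2)).
      * replace 1 with (1 - 0) by ring. apply (derivable_pt_lim_minus id (fun _ => zm)).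
        apply derivable_pt_lim_id. apply derivable_pt_lim_const.
      * apply derivable_pt_lim_pow.
    - intros x Hx. apply cont_of_derive with (g x - c * (x - zm)).
      apply (is_derive_minus Gf (fun x => c / 2 * (x - zm) ^ 2)); [apply Hd|].
      apply is_derive_Reals.
      replace (c * (x - zm)) with (c / 2 * (INR 2 * (x - zm) ^ 1 * 1)) by (simpl; field).
      apply (derivable_pt_lim_scal (fun x => (x - zm) ^ 2)).
      apply (derivable_pt_lim_comp (fun x => x - zm) (fun y => y ^ 2)).
      * replace 1 with (1 - 0) by ring. apply (derivable_pt_lim_minus id (fun _ => zm)).
        apply derivable_pt_lim_id. apply derivable_pt_lim_const.
      * apply derivable_pt_lim_pow.
    - intros x Hx. specialize (Hg1 x ltac:(unfold w in *; lra)). lra. }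
  assert (HGw : Gf zm < Gf w).
  { assert (Hw := Hlow w ltac:(unfold w in *; lra)).
    assert (0 < c / 2 * (w - zm) ^ 2) by (apply Rmult_lt_0_compat; [lra| apply pow_lt; unfold w; lra]). lra. }
  assert (HG1 : Gf 1 < Gf zm).
  { unfold Gf, G. rewrite F_one. pose proof (F_nonneg th zm ltac:(lra)). nra. }
  (* zp as the first return point *)
  set (E := fun y => exists u, w <= u <= 1 /\ Gf u <= Gf zm /\ y = - u).
  destruct (completeness E) as [m [Hm1 Hm2]].
  { exists (- w). intros y [u [Hu [_ ->]]]. lra. }
  { exists (-1). exists 1. split; [unfold w; lra| split; [lra| auto]]. }
  set (zp := - m).
  assert (Hzp1 : zp <= 1).
  { assert (- 1 <= m) by (apply Hm1; exists 1; split; [unfold w; lra| split; [lra| auto]]). unfold zp; lra. }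
  assert (Hzpw : w <= zp).
  { assert (m <= - w) by (apply Hm2; intros y [u [Hu [_ ->]]]; lra). unfold zp; lra. }
  assert (Hbef : forall u, w <= u < zp -> Gf zm < Gf u).
  { intros u Hu. destruct (Rlt_dec (Gf zm) (Gf u)); auto. exfalso.
    assert (- u <= m) by (apply Hm1; exists u; split; [lra| split; [lra| auto]]). unfold zp in Hu. lra. }
  assert (HGzp_le : Gf zp <= Gf zm).
  { destruct (Rle_dec (Gf zp) (Gf zm)) as [|Hn]; auto. exfalso.
    destruct (cont_use _ _ (HGc zp) (Gf zp - Gf zm)) as [eta [Heta Heta']]; [lra|].
    assert (m <= - zp - eta).
    { apply Hm2. intros y [u [Hu [Hgu ->]]].
      assert (- u <= m) by (apply Hm1; exists u; auto).
      destruct (Rle_dec (zp + eta) u); [lra|]. exfalso.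
      assert (Rabs (u - zp) < eta) by (unfold zp in *; solve_abs).
      specialize (Heta' u H0). solve_abs. }
    unfold zp in *. lra. }
  assert (Hzpw' : w < zp).
  { destruct (Req_dec w zp) as [He|]; [|lra]. rewrite <- He in HGzp_le. lra. }
  assert (HGzp : Gf zp = Gf zm).
  { destruct (Rle_dec (Gf zm) (Gf zp)) as [|Hn]; [lra|]. exfalso.
    destruct (cont_use _ _ (HGc zp) (Gf zm - Gf zp)) as [eta [Heta Heta']]; [lra|].
    set (u := Rmax w (zp - eta / 2)).
    assert (Hu : w <= u < zp) by (unfold u, Rmax; destruct Rle_dec; lra).
    assert (Rabs (u - zp) < eta) by (unfold u, Rmax; destruct Rle_dec; solve_abs).
    specialize (Heta' u H). specialize (Hbef u Hu). solve_abs. }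
  assert (Hpos : forall u, zm < u < zp -> Gf zm < Gf u).
  { intros u Hu. destruct (Rlt_dec u w).
    - assert (H := Hlow u ltac:(unfold w in *; lra)).
      assert (0 < c / 2 * (u - zm) ^ 2) by (apply Rmult_lt_0_compat; [lra| apply pow_lt; lra]). lra.
    - apply Hbef; lra. }
  assert (Hgzp : g zp < 0).
  { unfold g. destruct (Rle_dec 0 zp).
    - pose proof (F1_le0_mid th zp ltac:(lra)). lra.
    - destruct (Rlt_dec (F1 th zp) beta); [lra|]. exfalso.
      assert (Gf zm < Gf zp).
      { apply smono_deriv with g; [unfold w in *; lra| intros; apply Hd| intros; apply HGc|].
        intros x Hx. unfold g. destruct (Rle_dec x (u_minus th)).
        - assert (F1 th zm < F1 th x) by (apply F1_incr; lra). lra.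
        - assert (F1 th zp < F1 th x) by (apply F1_decr; lra). lra. }
      lra. }
  assert (Hgzm : g zm = 0) by (unfold g; lra).
  assert (Hlow' : exists a d, 0 < a /\ 0 < d /\ forall s, zm < s < zm + d -> a * (s - zm) ^ 2 <= Gf s - Gf zm).
  { exists (c / 2), (w - zm). split; [lra| split; [unfold w; lra|]]. intros s Hs'; apply Hlow; lra. }
  assert (He : 0 < Rpower eps p) by apply Rpower_pos.
  destruct (pulse_core Gf g zm zp (Rpower eps p) p Hd Hgc ltac:(unfold w in *; lra) HGzp Hpos Hgzm Hgzp Hlow' He Hp)
    as [psi [om [Hom [Hex [Hflux [H0 [Hrg [Hout [Hneg Hposd]]]]]]]]].
  exists psi. split; [|split; [|split]].
  - split; auto. intros x. split; [exists (g (psi x) / Rpower eps p); apply Hflux|].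
    replace (Derive (fun y => phi_p p (Derive psi y)) x) with (g (psi x) / Rpower eps p) by (symmetry; apply is_derive_unique; apply Hflux). rewrite DeriveG by auto. fold (g (psi x)).
    field. lra.
  - intros x. rewrite H0. apply Hrg.
  - rewrite H0. fold Gf. auto.
  - exists om. split; auto.
Qed.

Lemma filterlim_of_eps (f : R -> R) l :
  (forall eps, 0 < eps -> exists d, 0 < d /\ forall b, 0 < b < d -> Rabs (f b - l) < eps) ->
  filterlim f (at_right 0) (locally l).
Proof.
  intros H. apply filterlim_locally. intros eps.
  destruct (H eps (cond_pos eps)) as [d [Hd Hb]].
  exists (mkposreal d Hd). intros y Hy Hy0. apply Hb.
  unfold ball in Hy; simpl in Hy; unfold AbsRing_ball, abs, minus, plus, opp in Hy; simpl in Hy.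
  rewrite Ropp_0, Rplus_0_r in Hy. solve_abs.
Qed.

Lemma zm_small th : 2 < th -> forall eta, 0 < eta -> exists d, 0 < d /\
  forall beta z, 0 < beta < d -> beta < F1 th (u_minus th) -> is_min_crit th beta z ->
    Rabs (z + 1) < eta.
Proof.
  intros Hth eta Heta. pose proof (um_range th ltac:(lra)) as Hr.
  set (x0 := -1 + Rmin (eta / 2) ((1 + u_minus th) / 2)).
  assert (Hx0 : -1 < x0 < u_minus th /\ x0 < -1 + eta).
  { unfold x0. pose proof (Rmin_l (eta/2) ((1 + u_minus th) / 2)).
    pose proof (Rmin_r (eta/2) ((1 + u_minus th) / 2)).
    assert (0 < Rmin (eta / 2) ((1 + u_minus th) / 2)) by (apply Rmin_pos; lra). lra. }
  assert (HF1 : F1 th (-1) = 0) by (unfold F1; replace (1 - (-1) ^ 2) with 0 by ring; rewrite Rabs_R0, rpow_npos; lra).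
  assert (Hpos : 0 < F1 th x0) by (rewrite <- HF1; apply F1_incr; lra).
  exists (F1 th x0). split; auto.
  intros beta z Hb Hb' Hmc.
  destruct (zm_range th beta z Hth (conj (proj1 Hb) Hb') Hmc) as [HFz [Hz1 Hz2]].
  destruct (Rlt_dec z x0).
  - solve_abs.
  - exfalso. destruct (Req_dec z x0) as [->|Hne]; [lra|].
    assert (F1 th x0 < F1 th z) by (apply F1_incr; lra). lra.
Qed.

Lemma Rpower_ge_self x t : 1 <= x -> 1 <= t -> x <= Rpower x t.
Proof.
  intros Hx Ht. rewrite <- (Rpower_1 x) at 1 by lra. apply Rle_Rpower; lra.
Qed.

Lemma Rpower_1_base t : Rpower 1 t = 1.
Proof. unfold Rpower. rewrite ln_1, Rmult_0_r. apply exp_0. Qed.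

Lemma part1_lim th p eps (zm : R -> R) (Psi : R -> R -> R) :
  2 < th -> 2 < p -> 0 < eps ->
  (forall beta, 0 < beta < F1 th (u_minus th) ->
     is_min_crit th beta (zm beta) /\ pulse_up th p eps beta (zm beta) (Psi beta)) ->
  filterlim zm (at_right 0) (locally (-1)) /\
  filterlim (fun beta => Psi beta 0) (at_right 0) (locally 1).
Proof.
  intros Hth Hp Heps Hall.
  pose proof (um_range th ltac:(lra)) as Hr.
  assert (Hum : 0 < F1 th (u_minus th)).
  { assert (HF1 : F1 th (-1) = 0) by (unfold F1; replace (1 - (-1) ^ 2) with 0 by ring; rewrite Rabs_R0, rpow_npos; lra).
    rewrite <- HF1. apply F1_incr; lra. }
  split.
  - apply filterlim_of_eps. intros e He.
    destruct (zm_small th Hth e He) as [d [Hd Hz]].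
    exists (Rmin d (F1 th (u_minus th))). split; [apply Rmin_pos; lra|].
    intros b Hb. pose proof (Rmin_l d (F1 th (u_minus th))). pose proof (Rmin_r d (F1 th (u_minus th))).
    replace (zm b - -1) with (zm b + 1) by ring.
    apply (Hz b); [lra| lra|]. apply Hall. lra.
  - apply filterlim_of_eps. intros e He.
    set (kap := e * (1 + u_minus th)).
    assert (Hkap : 0 < kap) by (unfold kap; apply Rmult_lt_0_compat; lra).
    set (mu := / (2 * th) * Rpower kap th).
    assert (Hmu : 0 < mu) by (unfold mu; apply Rmult_lt_0_compat; [apply Rinv_0_lt_compat; lra| apply Rpower_pos]).
    assert (HFc : continuity_pt (F th) (-1)) by (apply cont_of_derive with (F1 th (-1)); apply F_deriv; auto).
    destruct (cont_use _ _ HFc (mu / 2)) as [eta1 [Heta1 HF1]]; [lra|].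
    assert (HFm1 : F th (-1) = 0) by (unfold F; replace (1 - (-1) ^ 2) with 0 by ring; rewrite Rabs_R0, rpow_npos; lra).
    destruct (zm_small th Hth eta1 Heta1) as [d [Hd Hz]].
    set (d' := Rmin (Rmin d (F1 th (u_minus th))) (Rmin (/ (4 * th)) (mu / 6))).
    assert (Hd' : 0 < d') by (unfold d'; repeat apply Rmin_pos; try lra; apply Rinv_0_lt_compat; lra).
    exists d'. split; auto. intros b Hb.
    assert (Hb1 : b < d) by (assert (d' <= d) by (unfold d'; eapply Rle_trans; apply Rmin_l); lra).
    assert (Hb2 : b < F1 th (u_minus th)) by (assert (d' <= F1 th (u_minus th)) by (unfold d'; eapply Rle_trans; [apply Rmin_l| apply Rmin_r]); lra).
    assert (Hb3 : b < / (4 * th)) by (assert (d' <= / (4 * th)) by (unfold d'; eapply Rle_trans; [apply Rmin_r| apply Rmin_l]); lra).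
    assert (Hb4 : b < mu / 6) by (assert (d' <= mu / 6) by (unfold d'; eapply Rle_trans; [apply Rmin_r| apply Rmin_r]); lra).
    destruct (Hall b ltac:(lra)) as [Hmc [[Hexd Hsol] [Hmax [HG [om [Hom [Hout [Hinc Hdec]]]]]]]].
    destruct (zm_range th b (zm b) Hth ltac:(lra) Hmc) as [HFz [Hz1 Hz2]].
    set (z := zm b) in *. set (y := Psi b 0) in *.
    assert (Hzclose : Rabs (z + 1) < eta1) by (apply (Hz b); auto; lra).
    assert (HFz_small : F th z < mu / 2).
    { assert (Rabs (z - -1) < eta1) by (replace (z - -1) with (z + 1) by ring; auto).
      specialize (HF1 z H). rewrite HFm1 in HF1. solve_abs. }
    assert (Hyz : z < y).
    { assert (Hpm : Psi b (- om) = z) by (apply Hout; lra).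
      rewrite <- Hpm. unfold y.
      apply smono_deriv with (Derive (Psi b)); [lra| | |].
      - intros x Hx. apply Derive_correct, Hexd.
      - intros x Hx. apply cont_of_derive with (Derive (Psi b) x). apply Derive_correct, Hexd.
      - intros x Hx. apply Hinc; lra. }
    assert (Hyu : u_minus th < y).
    { destruct (Rlt_dec (u_minus th) y); auto. exfalso.
      assert (G th b z < G th b y).
      { apply smono_deriv with (fun u => F1 th u - b); [lra| intros; apply G_deriv; auto| intros; apply G_cont; auto|].
        intros x Hx. assert (F1 th z < F1 th x) by (apply F1_incr; lra). lra. }
      lra. }
    unfold G in HG.
    assert (HFzle : F th z <= / (2 * th)).
    { unfold F. rewrite <- (Rmult_1_r (/ (2 * th))) at 2. apply Rmult_le_compat_l; [left; apply Rinv_0_lt_compat; lra|].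
      assert (Habs : Rabs (1 - z ^ 2) = 1 - z ^ 2) by (apply Rabs_right; nra).
      rewrite Habs. destruct (Rlt_dec 0 (1 - z ^ 2)).
      - rewrite rpow_pos by auto. apply Rle_trans with (Rpower 1 th); [|rewrite Rpower_1_base; lra].
        apply Rle_Rpower_l; [lra| split; auto; nra].
      - rewrite rpow_npos by lra. lra. }
    set (it := / (2 * th)).
    assert (Hit : 0 < it) by (unfold it; apply Rinv_0_lt_compat; lra).
    assert (Hit4 : / (4 * th) = it / 2) by (unfold it; field; lra).
    rewrite Hit4 in Hb3.
    assert (Hy2 : y < 2).
    { destruct (Rlt_dec y 2); auto. exfalso.
      assert (HFy : it * (y ^ 2 - 1) <= F th y).
      { unfold F. fold it. apply Rmult_le_compat_l; [lra|].
        rewrite Rabs_left by nra. replace (- (1 - y ^ 2)) with (y ^ 2 - 1) by ring.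
        rewrite rpow_pos by nra. apply Rpower_ge_self; nra. }
      assert (b * (y - z) <= b * (y + 1)) by (apply Rmult_le_compat_l; lra).
      assert (F th z <= it) by (unfold it; lra). assert (it * (y ^ 2 - 1) <= it + b * (y + 1)) by lra.
      assert (b * (y + 1) < it / 2 * (y + 1)) by (apply Rmult_lt_compat_r; lra).
      assert (0 < it * (y ^ 2 - 1 - 1 - (y + 1) / 2)) by (apply Rmult_lt_0_compat; nra).
      nra. }
    assert (HFy : F th y < mu).
    { assert (F th y = F th z + b * (y - z)) by lra.
      assert (b * (y - z) <= b * 3) by (apply Rmult_le_compat_l; lra). lra. }
    assert (H1y : Rabs (1 - y ^ 2) < kap).
    { destruct (Rlt_dec (Rabs (1 - y ^ 2)) kap); auto. exfalso.
      assert (mu <= F th y); [|lra].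
      unfold mu, F. apply Rmult_le_compat_l; [left; apply Rinv_0_lt_compat; lra|].
      rewrite rpow_pos by lra. apply Rle_Rpower_l; lra. }
    replace (1 - y ^ 2) with ((1 - y) * (1 + y)) in H1y by ring.
    rewrite Rabs_mult, (Rabs_right (1 + y)) in H1y by lra.
    unfold kap in H1y.
    assert (Rabs (1 - y) * (1 + u_minus th) < e * (1 + u_minus th)).
    { eapply Rle_lt_trans; [|exact H1y]. apply Rmult_le_compat_l; [apply Rabs_pos| lra]. }
    assert (Rabs (1 - y) < e) by (apply (Rmult_lt_reg_r (1 + u_minus th)); lra).
    rewrite Rabs_minus_sym. auto.
Qed.

Lemma phi_p_opp p s : phi_p p (- s) = - phi_p p s.
Proof. unfold phi_p. rewrite Rabs_Ropp. ring. Qed.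

Lemma part2 th p eps beta zp : 2 < th -> 2 < p -> 0 < eps ->
  F1 th (u_plus th) < beta < 0 -> is_max_crit th beta zp ->
  exists psi, pulse_down th p eps beta zp psi.
Proof.
  intros Hth Hp Heps Hb [Hc Hmax].
  rewrite up_um, F1_odd in Hb.
  rewrite DeriveG in Hc by auto.
  assert (Hmc : is_min_crit th (- beta) (- zp)).
  { split.
    - rewrite DeriveG by auto. rewrite F1_odd. lra.
    - intros w Hw. rewrite DeriveG in Hw by auto.
      assert (w' : - w <= zp).
      { apply Hmax. rewrite DeriveG by auto. rewrite F1_odd. lra. }
      lra. }
  destruct (part1 th p eps (- beta) (- zp) Hth Hp Heps ltac:(lra) Hmc)
    as [psi [[Hexd Hsol] [Hmx [HG [om [Hom [Hout [Hinc Hdec]]]]]]]].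
  exists (fun x => - psi x).
  assert (HD : forall y, Derive (fun x => - psi x) y = - Derive psi y) by (intros; apply Derive_opp).
  assert (Hfl : forall y, phi_p p (Derive (fun x => - psi x) y) = - phi_p p (Derive psi y))
    by (intros; rewrite HD; apply phi_p_opp).
  split; [|split; [|split]].
  - split.
    + intros x. apply (ex_derive_opp psi). apply Hexd.
    + intros x. destruct (Hsol x) as [Hex Heq]. split.
      * eapply ex_derive_ext; [intros y; symmetry; apply Hfl|].
        apply (ex_derive_opp (fun y => phi_p p (Derive psi y))). exact Hex.
      * rewrite (Derive_ext _ _ x Hfl). rewrite Derive_opp.
        rewrite DeriveG by auto. rewrite DeriveG in Heq by auto.
        rewrite F1_odd. lra.
  - intros x. specialize (Hmx x). lra.
  - unfold G in *. rewrite F_even. rewrite <- (F_even th zp).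
    lra.
  - exists om. split; auto. split; [|split].
    + intros x Hx. rewrite Hout; auto. ring.
    + intros x Hx. rewrite HD. specialize (Hinc x Hx). lra.
    + intros x Hx. rewrite HD. specialize (Hdec x Hx). lra.
Qed.

Theorem proposition2p2 (th p eps : R) :
  1 < th -> 1 < p -> 0 < eps -> 2 < p <= th ->
  (* (i) *)
  ((forall beta zm : R,
      0 < beta < Derive (F th) (u_minus th) ->
      is_min_crit th beta zm ->
      exists psi : R -> R, pulse_up th p eps beta zm psi) /\
   (* limits z_beta^- -> -1 and z_beta^+ = psi_beta(0) -> 1 as beta -> 0+,
      for any choice of the pulses psi_beta *)
   (forall (zm : R -> R) (Psi : R -> R -> R),
      (forall beta, 0 < beta < Derive (F th) (u_minus th) ->
         is_min_crit th beta (zm beta) /\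
         pulse_up th p eps beta (zm beta) (Psi beta)) ->
      filterlim zm (at_right 0) (locally (-1)) /\
      filterlim (fun beta => Psi beta 0) (at_right 0) (locally 1))) /\
  (* (ii) *)
  (forall beta zp : R,
      Derive (F th) (u_plus th) < beta < 0 ->
      is_max_crit th beta zp ->
      exists psi : R -> R, pulse_down th p eps beta zp psi).
Proof.
  intros Hth Hp1 Heps [Hp Hpth].
  assert (Hth2 : 2 < th) by lra.
  split; [split|].
  - intros beta zm Hb Hmc. rewrite DeriveF in Hb by auto. apply part1; auto.
  - intros zm Psi Hall. apply (part1_lim th p eps); auto.
    intros beta Hb. apply Hall. rewrite DeriveF by auto. auto.
  - intros beta zp Hb Hmc. rewrite DeriveF in Hb by auto. apply part2; auto.
Qed.
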